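(* There is a number $c$ with $0<c<\min\{k_0/4,\ k_1|E_0|/2,\ k_2|\pi_0|^2/2\}$ such that $V^{-1}([0,c])$ is a compact subset of $U$ and the set of all critical points of $V$ in $V^{-1}([0,c])$ equals $V^{-1}(0)=\{(R,\Omega): R\in SO(3),\ E(\Omega)=E_0,\ \pi(R,\Omega)=\pi_0\}$.
   Context: $\mathbb I$ is a symmetric positive definite $3\times3$ matrix. $\mathbb R^{3\times3}\times\mathbb R^3$ carries the standard inner product ($\operatorname{trace}(A^TB)$ on matrices), $\|A\|=\sqrt{\operatorname{trace}(A^TA)}$, and gradients are taken with respect to it. Define $E(\Omega)=\tfrac12\Omega^T\mathbb I\Omega$ and $\pi(R,\Omega)=R\mathbb I\Omega$. Fix $R_0\in SO(3)$, $\Omega_0\in\mathbb R^3\setminus\{0\}$, $E_0=E(\Omega_0)$, $\pi_0=\pi(R_0,\Omega_0)$. Let $U=\{(R,\Omega)\in\mathbb R^{3\times3}\times\mathbb R^3:\det R>0\}$ and, with constants $k_0,k_1,k_2>0$, $$V(R,\Omega)=\tfrac{k_0}{4}\|R^TR-I\|^2+\tfrac{k_1}{2}|E(\Omega)-E_0|^2+\tfrac{k_2}{2}|\pi(R,\Omega)-\pi_0|^2$$ on $U$. *)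

(* Defs.v *)
From Stdlib Require Import Reals Lra List.
Open Scope R_scope.

(* Vectors of R^3 and 3x3 real matrices (row-major triples). *)
Definition vec3 : Type := (R * R * R)%type.
Definition mat3 : Type := (vec3 * vec3 * vec3)%type.

Definition vzero : vec3 := (0, 0, 0).

Definition vget (v : vec3) (i : nat) : R :=
  match v with (a, b, c) => match i with O => a | S O => b | _ => c end end.
Definition mk_vec (f : nat -> R) : vec3 := (f 0%nat, f 1%nat, f 2%nat).

Definition mrow (A : mat3) (i : nat) : vec3 :=
  match A with (r0, r1, r2) => match i with O => r0 | S O => r1 | _ => r2 end end.
Definition mget (A : mat3) (i j : nat) : R := vget (mrow A i) j.
Definition mk_mat (f : nat -> nat -> R) : mat3 :=
  (mk_vec (f 0%nat), mk_vec (f 1%nat), mk_vec (f 2%nat)).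

Definition sum3 (f : nat -> R) : R := f 0%nat + f 1%nat + f 2%nat.

Definition vadd (u v : vec3) : vec3 := mk_vec (fun i => vget u i + vget v i).
Definition vscale (t : R) (v : vec3) : vec3 := mk_vec (fun i => t * vget v i).
Definition vsub (u v : vec3) : vec3 := mk_vec (fun i => vget u i - vget v i).
Definition dot (u v : vec3) : R := sum3 (fun i => vget u i * vget v i).
Definition vnorm (v : vec3) : R := sqrt (dot v v).

Definition madd (A B : mat3) : mat3 := mk_mat (fun i j => mget A i j + mget B i j).
Definition mscale (t : R) (A : mat3) : mat3 := mk_mat (fun i j => t * mget A i j).
Definition msub (A B : mat3) : mat3 := mk_mat (fun i j => mget A i j - mget B i j).
Definition transpose (A : mat3) : mat3 := mk_mat (fun i j => mget A j i).
Definition mmul (A B : mat3) : mat3 :=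
  mk_mat (fun i j => sum3 (fun k => mget A i k * mget B k j)).
Definition mvmul (A : mat3) (v : vec3) : vec3 :=
  mk_vec (fun i => sum3 (fun k => mget A i k * vget v k)).
Definition mid : mat3 := mk_mat (fun i j => if Nat.eqb i j then 1 else 0).
Definition trace (A : mat3) : R := sum3 (fun i => mget A i i).
Definition det (A : mat3) : R :=
  mget A 0 0 * (mget A 1 1 * mget A 2 2 - mget A 1 2 * mget A 2 1)
  - mget A 0 1 * (mget A 1 0 * mget A 2 2 - mget A 1 2 * mget A 2 0)
  + mget A 0 2 * (mget A 1 0 * mget A 2 1 - mget A 1 1 * mget A 2 0).

Definition frob_inner (A B : mat3) : R := trace (mmul (transpose A) B).
Definition frob_norm (A : mat3) : R := sqrt (frob_inner A A).

Definition SO3 (Rm : mat3) : Prop := mmul (transpose Rm) Rm = mid /\ det Rm = 1.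

Definition sym_posdef (I : mat3) : Prop :=
  transpose I = I /\ (forall x : vec3, x <> vzero -> 0 < dot x (mvmul I x)).

Definition state : Type := (mat3 * vec3)%type.
Definition sadd (p q : state) : state := (madd (fst p) (fst q), vadd (snd p) (snd q)).
Definition sscale (t : R) (p : state) : state := (mscale t (fst p), vscale t (snd p)).
Definition snorm (p : state) : R :=
  sqrt (frob_inner (fst p) (fst p) + dot (snd p) (snd p)).
Definition sdist (p q : state) : R :=
  snorm (msub (fst p) (fst q), vsub (snd p) (snd q)).

Definition is_open (O : state -> Prop) : Prop :=
  forall x, O x -> exists eps, 0 < eps /\ forall y, sdist x y < eps -> O y.

Definition is_compact (S : state -> Prop) : Prop :=
  forall (Idx : Type) (O : Idx -> state -> Prop),
    (forall i, is_open (O i)) ->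
    (forall x, S x -> exists i, O i x) ->
    exists l : list Idx, forall x, S x -> exists i, In i l /\ O i x.

Definition critical (f : state -> R) (p : state) : Prop :=
  forall h : state, derivable_pt_lim (fun t => f (sadd p (sscale t h))) 0 0.

Definition Efun (I : mat3) (Om : vec3) : R := / 2 * dot Om (mvmul I Om).
Definition pifun (I : mat3) (Rm : mat3) (Om : vec3) : vec3 := mvmul (mmul Rm I) Om.

Definition U (p : state) : Prop := 0 < det (fst p).

Definition Vfun (I R0 : mat3) (Om0 : vec3) (k0 k1 k2 : R) (p : state) : R :=
  let Rm := fst p in let Om := snd p in
  k0 / 4 * (frob_norm (msub (mmul (transpose Rm) Rm) mid)) ^ 2
  + k1 / 2 * (Rabs (Efun I Om - Efun I Om0)) ^ 2
  + k2 / 2 * (vnorm (vsub (pifun I Rm Om) (pifun I R0 Om0))) ^ 2.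

(* Main.v *)
Require Import Defs.
From Stdlib Require Import Reals Lra Lia List ZArith Classical ClassicalEpsilon FunctionalExtensionality.
Open Scope R_scope.
Definition adj (M : mat3) : mat3 :=
  let '((a,b,c),(d,e,f),(g,h,i)) := M in
  ((e*i-f*h, c*h-b*i, b*f-c*e),(f*g-d*i, a*i-c*g, c*d-a*f),(d*h-e*g, b*g-a*h, a*e-b*d)).
Definition outer (u v : vec3) : mat3 := mk_mat (fun i j => vget u i * vget v j).
Definition Amat (Rm : mat3) : mat3 := msub (mmul (transpose Rm) Rm) mid.
Definition mzero : mat3 := mk_mat (fun _ _ => 0).
Definition G1 (I R0 : mat3) (Om0 : vec3) (k0 k1 k2 : R) (p : state) : mat3 :=
  madd (mscale k0 (mmul (fst p) (Amat (fst p))))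
       (mscale k2 (outer (vsub (pifun I (fst p) (snd p)) (pifun I R0 Om0)) (mvmul I (snd p)))).
Definition Xv (I R0 : mat3) (Om0 : vec3) (k0 k1 k2 : R) (p : state) : vec3 :=
  vadd (vscale (k1 * (Efun I (snd p) - Efun I Om0)) (snd p))
       (vscale k2 (mvmul (transpose (fst p)) (vsub (pifun I (fst p) (snd p)) (pifun I R0 Om0)))).

Ltac unf := cbv beta iota zeta delta [vzero vget mk_vec mrow mget mk_mat sum3 vadd vscale vsub dot madd mscale msub transpose mmul mvmul mid trace det frob_inner sadd sscale fst snd Efun pifun Nat.eqb adj outer Amat mzero G1 Xv] in *.
Ltac peq := repeat match goal with |- (_,_) = (_,_) => apply pair_equal_spec; split end.
Ltac dm A := let a := fresh "a" in let b := fresh "a" in let c := fresh "a" in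
  let d := fresh "a" in let e := fresh "a" in let f := fresh "a" in
  let g := fresh "a" in let h := fresh "a" in let i := fresh "a" in
  destruct A as [[[[a b] c] [[d e] f]] [[g h] i]].
Ltac dv v := let a := fresh "x" in let b := fresh "x" in let c := fresh "x" in
  destruct v as [[a b] c].
Ltac dall := repeat match goal with
  | A : mat3 |- _ => dm A | v : vec3 |- _ => dv v | p : state |- _ => destruct p end.
Ltac solve_lin := intros; dall; unf; peq; ring.

Lemma mvmul_mmul A B v : mvmul (mmul A B) v = mvmul A (mvmul B v). Proof. solve_lin. Qed.
Lemma mvmul_madd A B v : mvmul (madd A B) v = vadd (mvmul A v) (mvmul B v). Proof. solve_lin. Qed.
Lemma mvmul_mid v : mvmul mid v = v. Proof. solve_lin. Qed.
Lemma mvmul_vscale A c v : mvmul A (vscale c v) = vscale c (mvmul A v). Proof. solve_lin. Qed.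
Lemma mvmul_vadd A u v : mvmul A (vadd u v) = vadd (mvmul A u) (mvmul A v). Proof. solve_lin. Qed.
Lemma mvmul_vzero A : mvmul A vzero = vzero. Proof. solve_lin. Qed.
Lemma adj_ident M v : vscale (det M) v = mvmul (adj M) (mvmul M v). Proof. solve_lin. Qed.
Lemma RtR Rm : mmul (transpose Rm) Rm = madd (Amat Rm) mid. Proof. solve_lin. Qed.
Lemma det_transpose M : det (transpose M) = det M. Proof. dm M; unf; ring. Qed.
Lemma dot_comm u v : dot u v = dot v u. Proof. dv u; dv v; unf; ring. Qed.
Lemma dot_vscale_l c u v : dot (vscale c u) v = c * dot u v. Proof. dv u; dv v; unf; ring. Qed.
Lemma dot_vscale_r c u v : dot u (vscale c v) = c * dot u v. Proof. dv u; dv v; unf; ring. Qed.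
Lemma dot_vadd_r u v w : dot u (vadd v w) = dot u v + dot u w. Proof. dv u; dv v; dv w; unf; ring. Qed.
Lemma dot_mvmul M u v : dot (mvmul M u) v = dot u (mvmul (transpose M) v).
Proof. dm M; dv u; dv v; unf; ring. Qed.
Lemma dot_nonneg v : 0 <= dot v v. Proof. dv v; unf; nra. Qed.
Lemma dot_pos v : v <> vzero -> 0 < dot v v.
Proof. dv v; unf; intro H.
  destruct (Req_dec x 0); destruct (Req_dec x0 0); destruct (Req_dec x1 0); subst;
  try (exfalso; apply H; reflexivity); nra. Qed.
Lemma vscale_zero c v : vscale c v = vzero -> c = 0 \/ v = vzero.
Proof. dv v; unf; intro H; injection H; intros.
  destruct (Req_dec c 0); [left; auto|right].
  assert (x=0) by (apply (Rmult_eq_reg_l c); lra).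
  assert (x0=0) by (apply (Rmult_eq_reg_l c); lra).
  assert (x1=0) by (apply (Rmult_eq_reg_l c); lra). subst; reflexivity. Qed.
Lemma mv_inj M v : det M <> 0 -> mvmul M v = vzero -> v = vzero.
Proof. intros Hd Hm. pose proof (adj_ident M v) as H. rewrite Hm, mvmul_vzero in H.
  destruct (vscale_zero _ _ H); [contradiction|auto]. Qed.
Lemma mv_sing M v : v <> vzero -> mvmul M v = vzero -> det M = 0.
Proof. intros Hv Hm. pose proof (adj_ident M v) as H. rewrite Hm, mvmul_vzero in H.
  destruct (vscale_zero _ _ H); [auto|contradiction]. Qed.
Lemma row_cs a b c x y z : (a*x+b*y+c*z)*(a*x+b*y+c*z) <= (a*a+b*b+c*c)*(x*x+y*y+z*z).
Proof.
  assert ((a*a+b*b+c*c)*(x*x+y*y+z*z) - (a*x+b*y+c*z)*(a*x+b*y+c*z) =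
    (a*y-b*x)*(a*y-b*x) + (a*z-c*x)*(a*z-c*x) + (b*z-c*y)*(b*z-c*y)) by ring.
  pose proof (Rle_0_sqr (a*y-b*x)); pose proof (Rle_0_sqr (a*z-c*x)); pose proof (Rle_0_sqr (b*z-c*y)); unfold Rsqr in *; lra. Qed.
Lemma mv_cs M v : dot (mvmul M v) (mvmul M v) <= frob_inner M M * dot v v.
Proof. dm M; dv v; unf.
  pose proof (row_cs a a0 a1 x x0 x1). pose proof (row_cs a2 a3 a4 x x0 x1).
  pose proof (row_cs a5 a6 a7 x x0 x1). lra. Qed.
Lemma Amat_sym Rm : exists a11 a12 a13 a22 a23 a33,
  Amat Rm = ((a11,a12,a13),(a12,a22,a23),(a13,a23,a33)).
Proof. dm Rm; unf. do 6 eexists. peq; ring_simplify; reflexivity. Qed.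

Lemma Seq I R0 Om0 k0 k1 k2 p :
  madd (mscale k0 (madd (Amat (fst p)) (mmul (Amat (fst p)) (Amat (fst p)))))
       (mscale (-(k1 * (Efun I (snd p) - Efun I Om0))) (outer (snd p) (mvmul I (snd p))))
  = msub (mmul (transpose (fst p)) (G1 I R0 Om0 k0 k1 k2 p)) (outer (Xv I R0 Om0 k0 k1 k2 p) (mvmul I (snd p))).
Proof. solve_lin. Qed.
Lemma msub_zero M u : msub (mmul M mzero) (outer vzero u) = mzero. Proof. solve_lin. Qed.
Lemma div_entry k0 s a b : k0 <> 0 -> k0*a + -s*b = 0 -> a = s/k0*b.
Proof. intros. apply (Rmult_eq_reg_l k0); auto. replace (k0*(s/k0*b)) with (s*b) by (field; auto). lra. Qed.
Lemma div_entry2 k s a b : k <> 0 -> s*b + k*a = 0 -> a = -s/k*b.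
Proof. intros. apply (Rmult_eq_reg_l k); auto. replace (k*(-s/k*b)) with (-(s*b)) by (field; auto). lra. Qed.
Lemma mat_div k0 s S W : k0 <> 0 -> madd (mscale k0 S) (mscale (-s) W) = mzero -> S = mscale (s/k0) W.
Proof. intro Hk. dm S; dm W; unf; intro H; injection H; intros; peq; apply div_entry; auto. Qed.
Lemma Xv_zero I R0 Om0 k0 k1 k2 p : k2 <> 0 -> Xv I R0 Om0 k0 k1 k2 p = vzero ->
  mvmul (transpose (fst p)) (vsub (pifun I (fst p) (snd p)) (pifun I R0 Om0))
  = vscale (-(k1 * (Efun I (snd p) - Efun I Om0))/k2) (snd p).
Proof. intro Hk. unfold Xv. set (e := k1 * (Efun I (snd p) - Efun I Om0)).
  set (y := mvmul _ _). clearbody e y. dv y. destruct p as [Rm w]. simpl. dv w. unf.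
  intro H; injection H; intros. peq; apply div_entry2; auto. Qed.
Lemma cancel_l t x y : t <> 0 -> t * x = t * y -> x = y.
Proof. intros Ht H. apply (Rmult_eq_reg_l t); auto. Qed.

Lemma P1 (a11 a12 a13 a22 a23 a33 w1 w2 w3 u1 u2 u3 t : R) :
  0 < w1*w1+w2*w2+w3*w3 -> t <> 0 -> 0 < w1*u1+w2*u2+w3*u3 ->
  let A := ((a11,a12,a13),(a12,a22,a23),(a13,a23,a33)) in
  madd A (mmul A A) = mscale t (outer (w1,w2,w3) (u1,u2,u3)) ->
  exists mu beta, 0 < mu /\ u1 = mu*w1 /\ u2 = mu*w2 /\ u3 = mu*w3 /\
    a11*w1+a12*w2+a13*w3 = beta*w1 /\ a12*w1+a22*w2+a23*w3 = beta*w2 /\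
    a13*w1+a23*w2+a33*w3 = beta*w3 /\ beta + beta*beta = t*mu*(w1*w1+w2*w2+w3*w3).
Proof.
  intros Hn Ht Hp A H. unfold A, outer in H. unf.
  injection H as e11 e12 e13 e21 e22 e23 e31 e32 e33.
  set (n := w1*w1+w2*w2+w3*w3) in *.
  assert (z12 : w2*u1 - w1*u2 = 0).
  { apply (cancel_l t); auto. lra. }
  assert (z13 : w3*u1 - w1*u3 = 0).
  { apply (cancel_l t); auto. lra. }
  assert (z23 : w3*u2 - w2*u3 = 0).
  { apply (cancel_l t); auto. lra. }
  set (q := w1*u1+w2*u2+w3*u3) in *.
  set (mu := q / n).
  assert (Hn0 : n <> 0) by lra.
  assert (U1 : u1 = mu*w1).
  { unfold mu. apply (cancel_l n); auto. field_simplify; auto.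
    assert (E : u1*n - q*w1 = w2*(w2*u1 - w1*u2) + w3*(w3*u1-w1*u3)) by (unfold n, q; ring).
    rewrite z12, z13 in E. lra. }
  assert (U2 : u2 = mu*w2).
  { unfold mu. apply (cancel_l n); auto. field_simplify; auto.
    assert (E : u2*n - q*w2 = - w1*(w2*u1 - w1*u2) + w3*(w3*u2-w2*u3)) by (unfold n, q; ring).
    rewrite z12, z23 in E. lra. }
  assert (U3 : u3 = mu*w3).
  { unfold mu. apply (cancel_l n); auto. field_simplify; auto.
    assert (E : u3*n - q*w3 = - w1*(w3*u1 - w1*u3) - w2*(w3*u2-w2*u3)) by (unfold n, q; ring).
    rewrite z13, z23 in E. lra. }
  assert (Hmu : 0 < mu) by (unfold mu; apply Rdiv_lt_0_compat; auto).
  clearbody mu q. subst u1 u2 u3.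
  set (s11 := a11 + (a11 * a11 + a12 * a12 + a13 * a13)) in e11.
  set (s12 := a12 + (a11 * a12 + a12 * a22 + a13 * a23)) in e12.
  set (s13 := a13 + (a11 * a13 + a12 * a23 + a13 * a33)) in e13.
  set (s21 := a12 + (a12 * a11 + a22 * a12 + a23 * a13)) in e21.
  set (s22 := a22 + (a12 * a12 + a22 * a22 + a23 * a23)) in e22.
  set (s23 := a23 + (a12 * a13 + a22 * a23 + a23 * a33)) in e23.
  set (s31 := a13 + (a13 * a11 + a23 * a12 + a33 * a13)) in e31.
  set (s32 := a23 + (a13 * a12 + a23 * a22 + a33 * a23)) in e32.
  set (s33 := a33 + (a13 * a13 + a23 * a23 + a33 * a33)) in e33.
  set (v1 := a11*w1+a12*w2+a13*w3). set (v2 := a12*w1+a22*w2+a23*w3).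
  set (v3 := a13*w1+a23*w2+a33*w3).
  assert (K1 : a11*(s11*w1+s12*w2+s13*w3) + a12*(s21*w1+s22*w2+s23*w3) + a13*(s31*w1+s32*w2+s33*w3)
     = s11*v1 + s12*v2 + s13*v3) by (unfold s11,s12,s13,s21,s22,s23,s31,s32,s33,v1,v2,v3; ring).
  assert (K2 : a12*(s11*w1+s12*w2+s13*w3) + a22*(s21*w1+s22*w2+s23*w3) + a23*(s31*w1+s32*w2+s33*w3)
     = s21*v1 + s22*v2 + s23*v3) by (unfold s11,s12,s13,s21,s22,s23,s31,s32,s33,v1,v2,v3; ring).
  assert (K3 : a13*(s11*w1+s12*w2+s13*w3) + a23*(s21*w1+s22*w2+s23*w3) + a33*(s31*w1+s32*w2+s33*w3)
     = s31*v1 + s32*v2 + s33*v3) by (unfold s11,s12,s13,s21,s22,s23,s31,s32,s33,v1,v2,v3; ring).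
  rewrite e11,e12,e13,e21,e22,e23,e31,e32,e33 in K1, K2, K3.
  set (wv := w1*v1+w2*v2+w3*v3).
  assert (Htm : t*mu*n <> 0).
  { apply Rmult_integral_contrapositive_currified; auto.
    apply Rmult_integral_contrapositive_currified; auto; lra. }
  set (beta := wv / n).
  assert (V1 : v1 = beta*w1).
  { unfold beta. apply (cancel_l (t*mu*n)); auto. field_simplify; auto. unfold wv, n, v1, v2, v3 in *. lra. }
  assert (V2 : v2 = beta*w2).
  { unfold beta. apply (cancel_l (t*mu*n)); auto. field_simplify; auto. unfold wv, n, v1, v2, v3 in *. lra. }
  assert (V3 : v3 = beta*w3).
  { unfold beta. apply (cancel_l (t*mu*n)); auto. field_simplify; auto. unfold wv, n, v1, v2, v3 in *. lra. }
  assert (L1 : s11*w1+s12*w2+s13*w3 = v1 + (a11*v1+a12*v2+a13*v3))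
    by (unfold s11,s12,s13,v1,v2,v3; ring).
  assert (L2 : s21*w1+s22*w2+s23*w3 = v2 + (a12*v1+a22*v2+a23*v3))
    by (unfold s21,s22,s23,v1,v2,v3; ring).
  assert (L3 : s31*w1+s32*w2+s33*w3 = v3 + (a13*v1+a23*v2+a33*v3))
    by (unfold s31,s32,s33,v1,v2,v3; ring).
  rewrite e11,e12,e13 in L1. rewrite e21,e22,e23 in L2. rewrite e31,e32,e33 in L3.
  rewrite ?V1, ?V2, ?V3 in L1. rewrite ?V1, ?V2, ?V3 in L2. rewrite ?V1, ?V2, ?V3 in L3.
  replace (a11 * (beta * w1) + a12 * (beta * w2) + a13 * (beta * w3)) with (beta * v1) in L1 by (unfold v1; ring).
  replace (a12 * (beta * w1) + a22 * (beta * w2) + a23 * (beta * w3)) with (beta * v2) in L2 by (unfold v2; ring).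
  replace (a13 * (beta * w1) + a23 * (beta * w2) + a33 * (beta * w3)) with (beta * v3) in L3 by (unfold v3; ring).
  rewrite ?V1, ?V2, ?V3 in L1. rewrite ?V1, ?V2, ?V3 in L2. rewrite ?V1, ?V2, ?V3 in L3.
  exists mu, beta. split; [auto|]. split; [ring|]. split; [ring|]. split; [ring|].
  split; [exact V1|]. split; [exact V2|]. split; [exact V3|].
  apply (cancel_l n); auto.
  assert (n * (beta + beta*beta) = w1*(beta * w1 + beta * (beta * w1)) + w2*(beta * w2 + beta * (beta * w2))
     + w3*(beta * w3 + beta * (beta * w3))) by (unfold n; ring).
  rewrite H, <- L1, <- L2, <- L3. unfold n; ring.
Qed.

Lemma P1v (A : mat3) (w u : vec3) t :
  (exists a11 a12 a13 a22 a23 a33, A = ((a11,a12,a13),(a12,a22,a23),(a13,a23,a33))) ->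
  0 < dot w w -> t <> 0 -> 0 < dot w u ->
  madd A (mmul A A) = mscale t (outer w u) ->
  exists mu beta, 0 < mu /\ u = vscale mu w /\ mvmul A w = vscale beta w /\
    beta + beta*beta = t*mu*dot w w.
Proof.
  intros (a11&a12&a13&a22&a23&a33&->) Hn Ht Hp H.
  dv w; dv u. unfold dot, sum3, vget in Hn, Hp.
  destruct (P1 a11 a12 a13 a22 a23 a33 x x0 x1 x2 x3 x4 t Hn Ht Hp H)
    as (mu&beta&Hmu&H1&H2&H3&H4&H5&H6&H7).
  exists mu, beta. split; auto. unf. split; [peq; auto|]. split; [peq; auto|]. exact H7.
Qed.

Lemma prod4_le a b c d x : 1 <= a <= x -> 1 <= b <= x -> 1 <= c <= x -> 1 <= d <= x ->
  1 <= a*b*c*d <= x*x*x*x.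
Proof. intros.
  assert (1 <= a*b) by (replace 1 with (1*1) by ring; apply Rmult_le_compat; lra).
  assert (1 <= a*b*c) by (replace 1 with (1*1) by ring; apply Rmult_le_compat; lra).
  assert (a*b <= x*x) by (apply Rmult_le_compat; lra).
  assert (a*b*c <= x*x*x) by (apply Rmult_le_compat; lra).
  split.
  - replace 1 with (1*1) by ring; apply Rmult_le_compat; lra.
  - apply Rmult_le_compat; lra. Qed.
Lemma prod4_ge a b c d x : x <= a <= 1 -> x <= b <= 1 -> x <= c <= 1 -> x <= d <= 1 -> 0 < x ->
  x*x*x*x <= a*b*c*d <= 1.
Proof. intros.
  assert (0 < x*x) by nra. assert (0 < x*x*x) by nra.
  assert (x*x <= a*b) by (apply Rmult_le_compat; lra).
  assert (x*x*x <= a*b*c) by (apply Rmult_le_compat; lra).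
  assert (a*b <= 1) by (replace 1 with (1*1) by ring; apply Rmult_le_compat; lra).
  assert (a*b*c <= 1) by (replace 1 with (1*1) by ring; apply Rmult_le_compat; lra).
  split.
  - apply Rmult_le_compat; lra.
  - replace 1 with (1*1) by ring; apply Rmult_le_compat; lra. Qed.

Lemma abs_bd x y : Rabs x <= y -> -y <= x <= y.
Proof. unfold Rabs; destruct (Rcase_abs x); lra. Qed.

Lemma scal (mu beta lam e E E0 n Q P mu0 eta delta k0 k1 k2 : R) :
  0<k0 -> 0<k1 -> 0<k2 -> 0 < E0 -> 0 < P -> 0 < n -> 0 < mu -> 0<eta -> eta <= /100 ->
  mu0 = P/(2*E0) -> 7*mu0*eta <= delta ->
  (Rabs (mu - mu0) < delta -> mu = mu0) ->
  e = E - E0 -> e <> 0 -> Rabs e <= eta*E0 -> 16*k1*Rabs e*E0 <= eta*k2*P ->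
  beta + beta*beta = k1*e/k0*mu*n -> beta*beta <= eta*eta ->
  Q = mu*mu*(1+beta)*n -> E = /2*(mu*n) -> P = (1+lam)*(1+lam)*Q -> 4*(lam*lam*Q) <= P ->
  lam*(mu*(1+beta)) = k1*e/k2 -> False.
Proof.
  intros Hk0 Hk1 Hk2 HE0 HP Hn Hmu Heta Heta1 Hmu0 Hdel Hiso He Hne Hea Hel Hb Hbb HQ HE HPQ Hd Hl.
  assert (Hbeta : -eta <= beta <= eta) by nra.
  assert (HQp : 0 < Q) by (rewrite HQ; repeat apply Rmult_lt_0_compat; lra).
  assert (Hl1 : 4*(lam*lam) <= (1+lam)*(1+lam)).
  { apply (Rmult_le_reg_r Q); auto. nra. }
  assert (Hl2 : -1/3 <= lam <= 1) by nra.
  assert (HQ4 : P <= 4*Q) by nra.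
  assert (HLQ : lam*Q = 2*k1*e*E/k2).
  { assert (lam*Q = (lam*(mu*(1+beta)))*(mu*n)) by (rewrite HQ; ring).
    rewrite H, Hl, HE. field. lra. }
  assert (HEb : E <= 2*E0) by (apply abs_bd in Hea; nra).
  assert (HEp : 0 < E) by (apply abs_bd in Hea; nra).
  assert (Hr : mu0 = mu * ((1+lam)*(1+lam)*(1+beta)*(E/E0))).
  { rewrite Hmu0, HPQ, HQ. rewrite HE. field. lra. }
  set (r := (1+lam)*(1+lam)*(1+beta)*(E/E0)) in *.
  assert (HmuE : 0 < mu*(1+beta)) by (apply Rmult_lt_0_compat; lra).
  destruct (Rlt_or_le 0 e) as [Hep|Hen].
  - rewrite Rabs_pos_eq in Hea, Hel by lra.
    assert (Hlp : 0 < lam).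
    { assert (0 < lam*(mu*(1+beta))) by (rewrite Hl; apply Rdiv_lt_0_compat; nra).
      nra. }
    assert (Hbp : 0 < beta).
    { assert (0 < k1*e/k0*mu*n) by (apply Rmult_lt_0_compat; [apply Rmult_lt_0_compat|]; auto;
        apply Rdiv_lt_0_compat; nra). nra. }
    assert (Hlam : lam <= eta).
    { assert (lam*P <= 4*(lam*Q)) by nra. rewrite HLQ in H.
      assert (4*(2*k1*e*E/k2) <= 16*k1*e*E0/k2).
      { replace (4*(2*k1*e*E/k2)) with ((8*k1*e*E)*/k2) by (unfold Rdiv; ring).
        replace (16*k1*e*E0/k2) with ((16*k1*e*E0)*/k2) by (unfold Rdiv; ring).
        apply Rmult_le_compat_r; [left; apply Rinv_0_lt_compat; auto|].
        assert (0 < k1*e) by (apply Rmult_lt_0_compat; lra). nra. }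
      assert (16*k1*e*E0/k2 <= eta*P).
      { apply (Rmult_le_reg_r k2); auto. field_simplify; lra. }
      nra. }
    assert (HEE : 1 <= E/E0 <= 1+eta).
    { split; apply (Rmult_le_reg_r E0); auto; field_simplify; lra. }
    assert (Hr1 : 1 <= r <= (1+eta)*(1+eta)*(1+eta)*(1+eta)) by (apply prod4_le; lra).
    assert (Hr2 : (1+eta)*(1+eta)*(1+eta)*(1+eta) <= 1 + 5*eta) by nra.
    assert (Hmu1 : mu <= mu0) by nra.
    assert (Hmm : mu0 - mu <= 5*eta*mu0) by nra.
    assert (mu = mu0).
    { apply Hiso. rewrite Rabs_minus_sym, Rabs_pos_eq by lra.
      assert (0 < mu0) by nra. nra. }
    assert (r = 1).
    { apply (Rmult_eq_reg_l mu); [|lra]. nra. }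
    assert (1 < r).
    { unfold r. assert (1 < E/E0) by (apply (Rmult_lt_reg_r E0); auto; field_simplify; lra).
      assert (1 < (1+lam)*(1+lam)) by nra. assert (1 < (1+lam)*(1+lam)*(1+beta)) by nra. nra. }
    lra.
  - assert (Hen' : e < 0) by lra.
    rewrite Rabs_left in Hea, Hel by lra.
    assert (Hlp : lam < 0).
    { assert (lam*(mu*(1+beta)) < 0).
      { rewrite Hl. unfold Rdiv. assert (k1*e < 0) by nra.
        assert (0 < /k2) by (apply Rinv_0_lt_compat; auto). nra. }
      nra. }
    assert (Hbp : beta < 0).
    { assert (k1*e/k0*mu*n < 0).
      { unfold Rdiv. assert (k1*e < 0) by nra. assert (0 < /k0) by (apply Rinv_0_lt_compat; auto).
        assert (k1*e*/k0 < 0) by nra. assert (k1*e*/k0*mu < 0) by nra. nra. }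
      nra. }
    assert (Hlam : -eta <= lam).
    { assert (-lam*P <= 4*(-lam*Q)) by nra. replace (-lam*Q) with (-(lam*Q)) in H by ring.
      rewrite HLQ in H.
      assert (4*(-(2*k1*e*E/k2)) <= 16*k1*(-e)*E0/k2).
      { replace (4*(-(2*k1*e*E/k2))) with ((8*k1*(-e)*E)*/k2) by (unfold Rdiv; ring).
        replace (16*k1*(-e)*E0/k2) with ((16*k1*(-e)*E0)*/k2) by (unfold Rdiv; ring).
        apply Rmult_le_compat_r; [left; apply Rinv_0_lt_compat; auto|].
        assert (0 < k1*(-e)) by (apply Rmult_lt_0_compat; lra). nra. }
      assert (16*k1*(-e)*E0/k2 <= eta*P).
      { apply (Rmult_le_reg_r k2); auto. field_simplify; lra. }
      nra. }
    assert (HEE : 1-eta <= E/E0 <= 1).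
    { split; apply (Rmult_le_reg_r E0); auto; field_simplify; lra. }
    assert (Hr1 : (1-eta)*(1-eta)*(1-eta)*(1-eta) <= r <= 1) by (apply prod4_ge; lra).
    assert (Hr2 : 1 - 4*eta <= (1-eta)*(1-eta)*(1-eta)*(1-eta)) by nra.
    assert (Hrp : 0 < r) by nra.
    assert (Hmu1 : mu0 <= mu) by nra.
    assert (Hmm : mu - mu0 <= 6*eta*mu0).
    { assert (mu*r = mu0) by lra. assert (mu*(1-r) <= mu*(4*eta)) by nra.
      assert (mu <= 2*mu0) by nra. nra. }
    assert (mu = mu0).
    { apply Hiso. rewrite Rabs_pos_eq by lra.
      assert (0 < mu0) by nra. nra. }
    assert (r = 1).
    { apply (Rmult_eq_reg_l mu); [|lra]. nra. }
    assert (r < 1).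
    { unfold r. assert (E/E0 < 1) by (apply (Rmult_lt_reg_r E0); auto; field_simplify; lra).
      assert ((1+lam)*(1+lam) < 1) by nra. assert (0 < (1+lam)*(1+lam)) by nra.
      assert ((1+lam)*(1+lam)*(1+beta) < 1) by nra.
      assert (0 < (1+lam)*(1+lam)*(1+beta)) by nra.
      assert (0 < E/E0) by (apply Rdiv_lt_0_compat; lra). nra. }
    lra.
Qed.

Lemma vcomb_zero a b c w : a + b*c = 0 -> vadd (vscale a w) (vscale b (vscale c w)) = vzero.
Proof. intro H. dv w; unf; peq;
  match goal with |- a * ?x + b * (c * ?x) = 0 =>
    replace (a * x + b * (c * x)) with ((a+b*c)*x) by ring; rewrite H; ring end. Qed.

Lemma core (I R0 : mat3) (Om0 : vec3) (k0 k1 k2 : R) (Rm : mat3) (w : vec3) (eta delta : R) :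
  sym_posdef I -> 0 < k0 -> 0 < k1 -> 0 < k2 ->
  0 < Efun I Om0 -> 0 < dot (pifun I R0 Om0) (pifun I R0 Om0) ->
  (forall mu, det (msub I (mscale mu mid)) = 0 ->
     Rabs (mu - dot (pifun I R0 Om0) (pifun I R0 Om0) / (2 * Efun I Om0)) < delta ->
     mu = dot (pifun I R0 Om0) (pifun I R0 Om0) / (2 * Efun I Om0)) ->
  0 < eta -> eta <= /100 ->
  7 * (dot (pifun I R0 Om0) (pifun I R0 Om0) / (2 * Efun I Om0)) * eta <= delta ->
  0 < det Rm ->
  G1 I R0 Om0 k0 k1 k2 (Rm, w) = mzero -> Xv I R0 Om0 k0 k1 k2 (Rm, w) = vzero ->
  frob_inner (Amat Rm) (Amat Rm) <= eta * eta ->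
  Rabs (Efun I w - Efun I Om0) <= eta * Efun I Om0 ->
  16 * k1 * Rabs (Efun I w - Efun I Om0) * Efun I Om0 <= eta * k2 * dot (pifun I R0 Om0) (pifun I R0 Om0) ->
  4 * dot (vsub (pifun I Rm w) (pifun I R0 Om0)) (vsub (pifun I Rm w) (pifun I R0 Om0))
    <= dot (pifun I R0 Om0) (pifun I R0 Om0) ->
  Efun I w = Efun I Om0.
Proof.
  intros HI Hk0 Hk1 Hk2 HE0 HP Hiso Heta Heta1 Hdel Hdet HG HX HA He Hel Hd.
  set (E0 := Efun I Om0) in *. set (pi0 := pifun I R0 Om0) in *.
  set (P := dot pi0 pi0) in *. set (mu0 := P / (2 * E0)) in *.
  set (E := Efun I w) in *. set (e := E - E0) in *.
  destruct (Req_dec e 0) as [He0|Hne]; [unfold e in He0; lra|]. exfalso.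
  destruct HI as [HIT HIP].
  assert (Hw : w <> vzero).
  { intro Hw0. assert (E = 0) by (unfold E; rewrite Hw0; unf; ring).
    assert (Rabs e = E0) by (unfold e; rewrite H; rewrite Rabs_minus_sym, Rminus_0_r, Rabs_pos_eq; lra).
    nra. }
  set (n := dot w w).
  assert (Hn : 0 < n) by (apply dot_pos; auto).
  set (u := mvmul I w).
  assert (Hwu : 0 < dot w u) by (apply HIP; auto).
  pose proof (Seq I R0 Om0 k0 k1 k2 (Rm, w)) as HS. simpl in HS.
  rewrite HG, HX, msub_zero in HS.
  apply mat_div in HS; [|lra].
  fold E E0 e u in HS.
  assert (Ht : k1 * e / k0 <> 0).
  { unfold Rdiv. apply Rmult_integral_contrapositive_currified;
    [apply Rmult_integral_contrapositive_currified; lra|].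
    apply Rinv_neq_0_compat; lra. }
  destruct (P1v (Amat Rm) w u (k1*e/k0) (Amat_sym Rm) Hn Ht Hwu HS)
    as (mu & beta & Hmu & Hu & HAw & Hb).
  assert (Hu' : mvmul I w = vscale mu w) by exact Hu.
  assert (Hbb : beta*beta <= eta*eta).
  { pose proof (mv_cs (Amat Rm) w) as Hc. rewrite HAw, dot_vscale_l, dot_vscale_r in Hc.
    fold n in Hc. apply (Rmult_le_reg_r n); auto.
    assert (frob_inner (Amat Rm) (Amat Rm) * n <= eta*eta*n) by (apply Rmult_le_compat_r; lra).
    nra. }
  assert (Hbeta : -eta <= beta <= eta) by nra.
  set (pi := pifun I Rm w) in *.
  assert (Hpi : mvmul (transpose Rm) pi = vscale (mu*(1+beta)) w).
  { unfold pi, pifun. rewrite mvmul_mmul, <- (mvmul_mmul (transpose Rm) Rm), RtR,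
      mvmul_madd, mvmul_mid, Hu', mvmul_vscale, HAw. clear. solve_lin. }
  pose proof (Xv_zero I R0 Om0 k0 k1 k2 (Rm,w) ltac:(lra) HX) as HX'. simpl in HX'.
  fold E E0 e pi pi0 in HX'.
  set (lam := k1*e/(k2*(mu*(1+beta)))).
  assert (Hmb : 0 < mu*(1+beta)) by (apply Rmult_lt_0_compat; lra).
  assert (Hl : lam*(mu*(1+beta)) = k1*e/k2) by (unfold lam; field; lra).
  set (d := vsub pi pi0) in *.
  assert (Hdl : vadd d (vscale lam pi) = vzero).
  { apply (mv_inj (transpose Rm)); [rewrite det_transpose; lra|].
    rewrite mvmul_vadd, mvmul_vscale, HX', Hpi.
    assert (Hz : - (k1*e)/k2 + lam*(mu*(1+beta)) = 0) by (rewrite Hl; field; lra).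
    apply vcomb_zero. exact Hz. }
  assert (Hpi0 : pi0 = vscale (1+lam) pi).
  { unfold d in Hdl. clear -Hdl. dv pi0; dv pi; unf. injection Hdl; intros. peq; lra. }
  assert (Hdd : d = vscale (-lam) pi).
  { clear -Hdl. dv d; dv pi; unf. injection Hdl; intros. peq; lra. }
  set (Q := dot pi pi).
  assert (HPQ : P = (1+lam)*(1+lam)*Q).
  { unfold P. rewrite Hpi0, dot_vscale_l, dot_vscale_r. fold Q. ring. }
  assert (Hd4 : 4*(lam*lam*Q) <= P).
  { rewrite Hdd, dot_vscale_l, dot_vscale_r in Hd. fold Q in Hd. lra. }
  assert (HQ : Q = mu*mu*(1+beta)*n).
  { unfold Q, pi, pifun. rewrite mvmul_mmul, dot_mvmul, <- (mvmul_mmul (transpose Rm) Rm), RtR,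
      mvmul_madd, mvmul_mid, Hu', mvmul_vscale, HAw, dot_vscale_l.
    unfold n. clear. dv w; unf; ring. }
  assert (HE : E = /2*(mu*n)).
  { unfold E, Efun. rewrite Hu', dot_vscale_r. reflexivity. }
  assert (Hiso' : Rabs (mu - mu0) < delta -> mu = mu0).
  { intro Hlt. apply Hiso; auto. apply (mv_sing _ w); auto.
    clear - Hu'. revert Hu'. dm I; dv w; unf; intro H; injection H; intros; peq; lra. }
  apply (scal mu beta lam e E E0 n Q P mu0 eta delta k0 k1 k2); auto; try lra.
Qed.

Lemma abs_mul_le x y a b : Rabs x <= a -> Rabs y <= b -> Rabs (x*y) <= a*b.
Proof. intros. rewrite Rabs_mult. apply Rmult_le_compat; auto; apply Rabs_pos. Qed.

Lemma cubic_iso a0 a1 a2 : exists del, 0 < del /\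
  forall h, a0 + a1*h + a2*(h*h) - h*(h*h) = 0 -> Rabs h < del -> h = 0.
Proof.
  destruct (Req_dec a0 0) as [H0|H0].
  - subst a0. destruct (Req_dec a1 0) as [H1|H1].
    + subst a1. destruct (Req_dec a2 0) as [H2|H2].
      * subst a2. exists 1. split; [lra|]. intros h Hh _.
        assert (h*(h*h) = 0) by lra. destruct (Rmult_integral _ _ H) as [|H']; auto.
        destruct (Rmult_integral _ _ H'); auto.
      * exists (Rabs a2). split; [apply Rabs_pos_lt; auto|]. intros h Hh Ha.
        destruct (Req_dec h 0) as [|Hn]; auto. exfalso.
        assert ((h*h)*(a2 - h) = 0) by lra. destruct (Rmult_integral _ _ H) as [H'|H'].
        -- destruct (Rmult_integral _ _ H'); auto.
        -- assert (h = a2) by lra. subst. lra.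
    + set (del := Rmin 1 (Rabs a1 / (Rabs a2 + 2))).
      assert (Hd : 0 < del) by (apply Rmin_pos; [lra|apply Rdiv_lt_0_compat; [apply Rabs_pos_lt; auto|pose proof (Rabs_pos a2); lra]]).
      exists del. split; auto. intros h Hh Ha.
      destruct (Req_dec h 0) as [|Hn]; auto. exfalso.
      assert (h*(a1 + a2*h - h*h) = 0) by lra. destruct (Rmult_integral _ _ H); [contradiction|].
      assert (Hh1 : Rabs h < 1) by (eapply Rlt_le_trans; [exact Ha|apply Rmin_l]).
      assert (Hh2 : Rabs h < Rabs a1 / (Rabs a2 + 2)) by (eapply Rlt_le_trans; [exact Ha|apply Rmin_r]).
      assert (Rabs (a2*h - h*h) <= Rabs h * (Rabs a2 + 1)).
      { replace (a2*h - h*h) with (h*(a2 - h)) by ring. rewrite Rabs_mult.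
        apply Rmult_le_compat_l; [apply Rabs_pos|]. unfold Rminus. eapply Rle_trans; [apply Rabs_triang|].
        rewrite Rabs_Ropp. lra. }
      assert (Rabs h * (Rabs a2 + 2) < Rabs a1).
      { apply (Rmult_lt_compat_r (Rabs a2 + 2)) in Hh2; [|pose proof (Rabs_pos a2); lra].
        replace (Rabs a1 / (Rabs a2 + 2) * (Rabs a2 + 2)) with (Rabs a1) in Hh2 by (field; pose proof (Rabs_pos a2); lra). lra. }
      assert (a1 = -(a2*h - h*h)) by lra. rewrite H4, Rabs_Ropp in H3.
      pose proof (Rabs_pos h). nra.
  - set (del := Rmin 1 (Rabs a0 / (Rabs a1 + Rabs a2 + 2))).
    assert (Hp : 0 < Rabs a1 + Rabs a2 + 2) by (pose proof (Rabs_pos a1); pose proof (Rabs_pos a2); lra).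
    assert (Hd : 0 < del) by (apply Rmin_pos; [lra|apply Rdiv_lt_0_compat; [apply Rabs_pos_lt; auto|lra]]).
    exists del. split; auto. intros h Hh Ha. exfalso.
    assert (Hh1 : Rabs h < 1) by (eapply Rlt_le_trans; [exact Ha|apply Rmin_l]).
    assert (Hh2 : Rabs h < Rabs a0 / (Rabs a1 + Rabs a2 + 2)) by (eapply Rlt_le_trans; [exact Ha|apply Rmin_r]).
    assert (Rabs (a1*h + a2*(h*h) - h*(h*h)) <= Rabs h * (Rabs a1 + Rabs a2 + 1)).
    { replace (a1*h + a2*(h*h) - h*(h*h)) with (h*(a1 + a2*h - h*h)) by ring. rewrite Rabs_mult.
      apply Rmult_le_compat_l; [apply Rabs_pos|].
      assert (Rabs (h*h) <= 1) by (rewrite Rabs_mult; pose proof (Rabs_pos h); nra).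
      assert (Rabs (a2*h) <= Rabs a2) by (rewrite Rabs_mult; pose proof (Rabs_pos a2); pose proof (Rabs_pos h); nra).
      unfold Rminus. eapply Rle_trans; [apply Rabs_triang|]. rewrite Rabs_Ropp.
      eapply Rle_trans; [apply Rplus_le_compat_r; apply Rabs_triang|]. lra. }
    assert (Rabs h * (Rabs a1 + Rabs a2 + 2) < Rabs a0).
    { apply (Rmult_lt_compat_r (Rabs a1 + Rabs a2 + 2)) in Hh2; [|lra].
      replace (Rabs a0 / (Rabs a1 + Rabs a2 + 2) * (Rabs a1 + Rabs a2 + 2)) with (Rabs a0) in Hh2 by (field; lra). lra. }
    assert (a0 = -(a1*h + a2*(h*h) - h*(h*h))) by lra. rewrite H2, Rabs_Ropp in H1.
    pose proof (Rabs_pos h). nra.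
Qed.

Definition coord (p : state) (i : nat) : R :=
  match p with ((((a,b),c),((d,e),f),((g,h),k)),((u,v),w)) =>
    match i with 0 => a | 1 => b | 2 => c | 3 => d | 4 => e | 5 => f | 6 => g | 7 => h
    | 8 => k | 9 => u | 10 => v | 11 => w | _ => 0 end end.
Definition mkpt (f : nat -> R) : state :=
  (((f 0%nat, f 1%nat, f 2%nat), (f 3%nat, f 4%nat, f 5%nat), (f 6%nat, f 7%nat, f 8%nat)),
   (f 9%nat, f 10%nat, f 11%nat)).
Definition sum12 (f : nat -> R) : R :=
  f 0%nat + f 1%nat + f 2%nat + f 3%nat + f 4%nat + f 5%nat + f 6%nat + f 7%nat
  + f 8%nat + f 9%nat + f 10%nat + f 11%nat.

Lemma abs_bd' x y : Rabs x <= y -> -y <= x <= y.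
Proof. unfold Rabs; destruct (Rcase_abs x); lra. Qed.

Lemma coord_mkpt f i : (i < 12)%nat -> coord (mkpt f) i = f i.
Proof. intro H. do 12 (destruct i as [|i]; [reflexivity|]). lia. Qed.

Lemma sdist_coord x y : sdist x y = sqrt (sum12 (fun i => (coord x i - coord y i) * (coord x i - coord y i))).
Proof.
  destruct x as [[[[[a1 a2] a3] [[a4 a5] a6]] [[a7 a8] a9]] [[a10 a11] a12]].
  destruct y as [[[[[b1 b2] b3] [[b4 b5] b6]] [[b7 b8] b9]] [[b10 b11] b12]].
  unfold sdist, snorm, sum12, coord. simpl. f_equal.
  unfold frob_inner, trace, mmul, transpose, msub, dot, vsub, mk_mat, mk_vec, mget, mrow, vget, sum3; simpl. ring.
Qed.

Lemma sum12_nonneg f : (forall i, 0 <= f i) -> 0 <= sum12 f.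
Proof. intro H. unfold sum12. repeat (apply Rplus_le_le_0_compat; [|apply H]). apply H. Qed.

Lemma coord_le_sdist x y i : Rabs (coord x i - coord y i) <= sdist x y.
Proof.
  rewrite sdist_coord. set (g := fun i => (coord x i - coord y i) * (coord x i - coord y i)).
  rewrite <- sqrt_Rsqr_abs. apply sqrt_le_1_alt. unfold Rsqr.
  assert (Hg : forall j, 0 <= g j) by (intro j; unfold g; apply Rle_0_sqr).
  change ((coord x i - coord y i) * (coord x i - coord y i)) with (g i).
  unfold sum12.
  do 12 (destruct i as [|i]; [pose proof (Hg 0%nat); pose proof (Hg 1%nat); pose proof (Hg 2%nat);
    pose proof (Hg 3%nat); pose proof (Hg 4%nat); pose proof (Hg 5%nat); pose proof (Hg 6%nat);
    pose proof (Hg 7%nat); pose proof (Hg 8%nat); pose proof (Hg 9%nat); pose proof (Hg 10%nat);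
    pose proof (Hg 11%nat); lra|]).
  assert (g (12+i)%nat = 0).
  { unfold g. destruct x as [[[[[a1 a2] a3] [[a4 a5] a6]] [[a7 a8] a9]] [[a10 a11] a12]].
    destruct y as [[[[[b1 b2] b3] [[b4 b5] b6]] [[b7 b8] b9]] [[b10 b11] b12]]. simpl. ring. }
  simpl in H. rewrite H. apply sum12_nonneg; auto.
Qed.

Lemma sdist_le x y w : 0 <= w -> (forall i, (i < 12)%nat -> Rabs (coord x i - coord y i) <= w) ->
  sdist x y <= 4 * w.
Proof.
  intros Hw H. rewrite sdist_coord. rewrite <- (sqrt_square (4*w)) by lra.
  apply sqrt_le_1_alt.
  assert (Hs : forall i, (i < 12)%nat -> (coord x i - coord y i) * (coord x i - coord y i) <= w * w).
  { intros i Hi. specialize (H i Hi). set (z := coord x i - coord y i) in *.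
    assert (z*z = Rabs z * Rabs z) by (rewrite <- Rabs_mult; rewrite Rabs_pos_eq; [reflexivity|apply Rle_0_sqr]).
    rewrite H0. apply Rmult_le_compat; auto; apply Rabs_pos. }
  unfold sum12.
  pose proof (Hs 0%nat ltac:(lia)); pose proof (Hs 1%nat ltac:(lia)); pose proof (Hs 2%nat ltac:(lia));
  pose proof (Hs 3%nat ltac:(lia)); pose proof (Hs 4%nat ltac:(lia)); pose proof (Hs 5%nat ltac:(lia));
  pose proof (Hs 6%nat ltac:(lia)); pose proof (Hs 7%nat ltac:(lia)); pose proof (Hs 8%nat ltac:(lia));
  pose proof (Hs 9%nat ltac:(lia)); pose proof (Hs 10%nat ltac:(lia)); pose proof (Hs 11%nat ltac:(lia)).
  nra.
Qed.

Definition inC (lo hi : nat -> R) (p : state) : Prop :=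
  forall i, (i < 12)%nat -> lo i <= coord p i <= hi i.
Definition FC (Sx : state -> Prop) {Idx : Type} (O : Idx -> state -> Prop) (T : state -> Prop) : Prop :=
  exists l : list Idx, forall x, Sx x -> T x -> exists i, In i l /\ O i x.
Definition upd (f : nat -> R) (j : nat) (v : R) : nat -> R :=
  fun i => if Nat.eqb i j then v else f i.

Definition bis (Sx : state -> Prop) {Idx : Type} (O : Idx -> state -> Prop) (j : nat)
  (s : (nat -> R) * (nat -> R)) : (nat -> R) * (nat -> R) :=
  let lo := fst s in let hi := snd s in let m := (lo j + hi j) / 2 in
  if excluded_middle_informative (FC Sx O (inC lo (upd hi j m))) then (upd lo j m, hi)
  else (lo, upd hi j m).

Lemma FC_union Sx {Idx} (O : Idx -> state -> Prop) T T1 T2 :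
  (forall x, T x -> T1 x \/ T2 x) -> FC Sx O T1 -> FC Sx O T2 -> FC Sx O T.
Proof.
  intros H [l1 H1] [l2 H2]. exists (l1 ++ l2). intros x Hsx Tx.
  destruct (H x Tx) as [Hx|Hx].
  - destruct (H1 x Hsx Hx) as [i [Hi Oi]]. exists i. split; auto. apply in_or_app; auto.
  - destruct (H2 x Hsx Hx) as [i [Hi Oi]]. exists i. split; auto. apply in_or_app; auto.
Qed.

Lemma bis_inv Sx {Idx} (O : Idx -> state -> Prop) j s :
  (j < 12)%nat -> ~ FC Sx O (inC (fst s) (snd s)) -> ~ FC Sx O (inC (fst (bis Sx O j s)) (snd (bis Sx O j s))).
Proof.
  intros Hj Hn. destruct s as [lo hi]. unfold bis; simpl.
  destruct (excluded_middle_informative _) as [Hl|Hl]; simpl; auto.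
  intro Hr. apply Hn. simpl. eapply (FC_union Sx O _ _ _); [|exact Hl|exact Hr].
  intros x Hx. set (m := (lo j + hi j)/2).
  destruct (Rle_or_lt (coord x j) m) as [Hc|Hc].
  - left. intros i Hi. unfold upd. destruct (Nat.eqb_spec i j); [subst; split; [apply Hx; auto|auto]|].
    apply Hx; auto.
  - right. intros i Hi. unfold upd. destruct (Nat.eqb_spec i j); [subst; split; [lra|apply Hx; auto]|].
    apply Hx; auto.
Qed.

Lemma bis_other Sx {Idx} (O : Idx -> state -> Prop) j s i : i <> j ->
  fst (bis Sx O j s) i = fst s i /\ snd (bis Sx O j s) i = snd s i.
Proof.
  intro H. destruct s as [lo hi]. unfold bis, upd; simpl.
  destruct (excluded_middle_informative _); simpl;
  destruct (Nat.eqb_spec i j); try contradiction; auto.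
Qed.

Lemma bis_same Sx {Idx} (O : Idx -> state -> Prop) j s :
  snd (bis Sx O j s) j - fst (bis Sx O j s) j = (snd s j - fst s j) / 2 /\
  fst s j <= fst (bis Sx O j s) j /\ snd (bis Sx O j s) j <= snd s j \/
  (snd s j < fst s j).
Proof.
  destruct s as [lo hi]. unfold bis, upd; simpl.
  destruct (Rle_or_lt (lo j) (hi j)); [left|right; auto].
  destruct (excluded_middle_informative _); simpl; rewrite Nat.eqb_refl;
  repeat split; lra.
Qed.

Fixpoint iterb (Sx : state -> Prop) {Idx} (O : Idx -> state -> Prop) (k : nat)
  (s : (nat -> R) * (nat -> R)) : (nat -> R) * (nat -> R) :=
  match k with 0%nat => s | S k' => bis Sx O k' (iterb Sx O k' s) end.

Lemma iterb_prop Sx {Idx} (O : Idx -> state -> Prop) k s :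
  (k <= 12)%nat ->
  (forall i, (i < 12)%nat -> fst s i <= snd s i) ->
  (~ FC Sx O (inC (fst s) (snd s)) -> ~ FC Sx O (inC (fst (iterb Sx O k s)) (snd (iterb Sx O k s)))) /\
  forall i, (i < 12)%nat ->
    ((i < k)%nat -> snd (iterb Sx O k s) i - fst (iterb Sx O k s) i = (snd s i - fst s i) / 2 /\
       fst s i <= fst (iterb Sx O k s) i /\ snd (iterb Sx O k s) i <= snd s i) /\
    ((k <= i)%nat -> fst (iterb Sx O k s) i = fst s i /\ snd (iterb Sx O k s) i = snd s i).
Proof.
  intros Hk Hle. induction k as [|k IH].
  - simpl. split; auto. intros i Hi. split; [lia|auto].
  - destruct IH as [IH1 IH2]; [lia|]. simpl. split.
    + intro Hn. apply bis_inv; [lia|]. auto.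
    + intros i Hi. split.
      * intro Hik. destruct (Nat.eq_dec i k) as [->|Hne].
        -- destruct (IH2 k Hi) as [_ Hu]. destruct (Hu (le_n k)) as [Hf Hs].
           destruct (bis_same Sx O k (iterb Sx O k s)) as [Hb|Hb];
             rewrite Hf, Hs in *; [|specialize (Hle k Hi); lra]. exact Hb.
        -- destruct (bis_other Sx O k (iterb Sx O k s) i Hne) as [Hf Hs]. rewrite Hf, Hs.
           apply (proj1 (IH2 i Hi)). lia.
      * intro Hki. destruct (bis_other Sx O k (iterb Sx O k s) i ltac:(lia)) as [Hf Hs].
        rewrite Hf, Hs. apply (proj2 (IH2 i Hi)). lia.
Qed.

Definition bigs (Sx : state -> Prop) {Idx} (O : Idx -> state -> Prop) s := iterb Sx O 12 s.

Fixpoint seqn (Sx : state -> Prop) {Idx} (O : Idx -> state -> Prop) (M : R) (n : nat) :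
  (nat -> R) * (nat -> R) :=
  match n with 0%nat => ((fun _ => -M), (fun _ => M)) | S n' => bigs Sx O (seqn Sx O M n') end.

Lemma seqn_prop Sx {Idx} (O : Idx -> state -> Prop) M n : 0 <= M ->
  (~ FC Sx O (inC (fst (seqn Sx O M 0)) (snd (seqn Sx O M 0))) ->
     ~ FC Sx O (inC (fst (seqn Sx O M n)) (snd (seqn Sx O M n)))) /\
  forall i, (i < 12)%nat ->
    snd (seqn Sx O M n) i - fst (seqn Sx O M n) i = 2 * M / 2 ^ n /\
    fst (seqn Sx O M n) i <= fst (seqn Sx O M (S n)) i /\
    snd (seqn Sx O M (S n)) i <= snd (seqn Sx O M n) i.
Proof.
  intro HM. induction n as [|n IH].
  - split; auto. intros i Hi. simpl.
    assert (Hle : forall i, (i < 12)%nat -> fst ((fun _ : nat => -M), (fun _ : nat => M)) i <=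
              snd ((fun _ : nat => -M), (fun _ : nat => M)) i) by (intros; simpl; lra).
    destruct (iterb_prop Sx O 12 _ (le_n 12) Hle) as [_ H2].
    destruct (proj1 (H2 i Hi) Hi) as [Hw [Hf Hs]]. unfold bigs. simpl in *. repeat split; lra.
  - destruct IH as [IH1 IH2].
    assert (Hle : forall i, (i < 12)%nat -> fst (seqn Sx O M (S n)) i <= snd (seqn Sx O M (S n)) i).
    { intros i Hi. destruct (IH2 i Hi) as [Hw [Hf Hs]].
      assert (0 < 2 ^ n) by (apply pow_lt; lra).
      assert (0 <= 2 * M / 2 ^ n) by (apply Rmult_le_pos; [lra|left; apply Rinv_0_lt_compat; auto]).
      destruct (iterb_prop Sx O 12 (seqn Sx O M n) (le_n 12)) as [_ H2].
      { intros j Hj. destruct (IH2 j Hj) as [Hw' _]. lra. }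
      destruct (proj1 (H2 i Hi) Hi) as [Hw' [Hf' Hs']]. simpl. unfold bigs. lra. }
    split.
    + intro H0. simpl. unfold bigs.
      destruct (iterb_prop Sx O 12 (seqn Sx O M n) (le_n 12)) as [H1 _].
      { intros j Hj. destruct (IH2 j Hj) as [Hw' _].
        assert (0 < 2 ^ n) by (apply pow_lt; lra).
        assert (0 <= 2 * M / 2 ^ n) by (apply Rmult_le_pos; [lra|left; apply Rinv_0_lt_compat; auto]).
        lra. }
      apply H1. apply IH1. auto.
    + intros i Hi.
      destruct (iterb_prop Sx O 12 (seqn Sx O M (S n)) (le_n 12) Hle) as [_ H2].
      destruct (proj1 (H2 i Hi) Hi) as [Hw [Hf Hs]].
      destruct (IH2 i Hi) as [Hw0 _].
      assert (Hwn : snd (seqn Sx O M (S n)) i - fst (seqn Sx O M (S n)) i = (2 * M / 2 ^ n) / 2).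
      { destruct (iterb_prop Sx O 12 (seqn Sx O M n) (le_n 12)) as [_ H3].
        { intros j Hj. destruct (IH2 j Hj) as [Hw' _].
          assert (0 < 2 ^ n) by (apply pow_lt; lra).
          assert (0 <= 2 * M / 2 ^ n) by (apply Rmult_le_pos; [lra|left; apply Rinv_0_lt_compat; auto]).
          lra. }
        destruct (proj1 (H3 i Hi) Hi) as [Hw' _]. simpl. unfold bigs. rewrite Hw', Hw0. reflexivity. }
      repeat split.
      * rewrite Hwn. simpl. field. apply pow_nonzero. lra.
      * simpl (seqn Sx O M (S (S n))). unfold bigs at 1. exact Hf.
      * simpl (seqn Sx O M (S (S n))). unfold bigs at 1. exact Hs.
Qed.

Lemma seqn_mono Sx {Idx} (O : Idx -> state -> Prop) M n m i : 0 <= M -> (i < 12)%nat -> (n <= m)%nat ->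
  fst (seqn Sx O M n) i <= fst (seqn Sx O M m) i /\ snd (seqn Sx O M m) i <= snd (seqn Sx O M n) i.
Proof.
  intros HM Hi Hnm. induction Hnm as [|m Hnm IH]; [lra|].
  destruct (proj2 (seqn_prop Sx O M m HM) i Hi) as [_ [H1 H2]]. lra.
Qed.

Lemma seqn_lohi Sx {Idx} (O : Idx -> state -> Prop) M n m i : 0 <= M -> (i < 12)%nat ->
  fst (seqn Sx O M n) i <= snd (seqn Sx O M m) i.
Proof.
  intros HM Hi. set (k := Nat.max n m).
  destruct (seqn_mono Sx O M n k i HM Hi ltac:(lia)) as [H1 _].
  destruct (seqn_mono Sx O M m k i HM Hi ltac:(lia)) as [_ H2].
  destruct (proj2 (seqn_prop Sx O M k HM) i Hi) as [Hw _].
  assert (0 < 2 ^ k) by (apply pow_lt; lra).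
  assert (0 <= 2 * M / 2 ^ k) by (apply Rmult_le_pos; [lra|left; apply Rinv_0_lt_compat; auto]).
  lra.
Qed.

Lemma pow2_ge n : INR n <= 2 ^ n.
Proof. induction n as [|n IH]; [simpl; lra|]. rewrite S_INR. simpl.
  assert (1 <= 2 ^ n) by (apply pow_R1_Rle; lra). lra. Qed.

Lemma small_pow K eps : 0 < eps -> 0 <= K -> exists n, K / 2 ^ n < eps.
Proof.
  intros He HK. destruct (archimed (K / eps)) as [H1 _].
  assert (0 <= K/eps) by (apply Rmult_le_pos; [auto|left; apply Rinv_0_lt_compat; auto]).
  assert (Hup : (0 <= up (K/eps))%Z) by (apply le_IZR; lra).
  exists (Z.to_nat (up (K/eps))).
  pose proof (pow2_ge (Z.to_nat (up (K/eps)))) as Hp.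
  rewrite INR_IZR_INZ, Z2Nat.id in Hp by auto.
  set (p := 2 ^ Z.to_nat (up (K / eps))) in *.
  assert (Hpp : 0 < p) by (unfold p; apply pow_lt; lra).
  apply (Rmult_lt_reg_r p); auto. unfold Rdiv. rewrite Rmult_assoc, Rinv_l by lra.
  assert (K < eps * p).
  { apply (Rmult_lt_reg_r (/eps)); [apply Rinv_0_lt_compat; auto|].
    replace (eps * p * / eps) with p by (field; lra). unfold Rdiv in *. lra. }
  lra.
Qed.

Definition lubc (Sx : state -> Prop) {Idx} (O : Idx -> state -> Prop) M (HM : 0 <= M) (i : nat) : R.
Proof.
  destruct (le_lt_dec 12 i) as [_|Hi].
  - exact 0.
  - refine (proj1_sig (completeness (fun r => exists n, r = fst (seqn Sx O M n) i) _ _)).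
    + exists (snd (seqn Sx O M 0) i). intros r [n ->]. apply seqn_lohi; auto.
    + exists (fst (seqn Sx O M 0) i). exists 0%nat. reflexivity.
Defined.

Lemma lubc_prop Sx {Idx} (O : Idx -> state -> Prop) M HM i n : (i < 12)%nat ->
  fst (seqn Sx O M n) i <= lubc Sx O M HM i <= snd (seqn Sx O M n) i.
Proof.
  intro Hi. unfold lubc. destruct (le_lt_dec 12 i) as [Hc|Hc]; [lia|].
  destruct (completeness _ _ _) as [x [Hub Hl]]. simpl. split.
  - apply Hub. exists n. reflexivity.
  - apply Hl. intros r [m ->]. apply seqn_lohi; auto.
Qed.

Lemma HB (Sx : state -> Prop) (M : R) : 0 <= M ->
  (forall p, Sx p -> forall i, (i < 12)%nat -> Rabs (coord p i) <= M) ->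
  (forall x, (forall eps, 0 < eps -> exists y, Sx y /\ sdist x y < eps) -> Sx x) ->
  is_compact Sx.
Proof.
  intros HM Hb Hcl Idx O Hopen Hcov. apply NNPP. intro Hnf.
  assert (H0 : ~ FC Sx O (inC (fst (seqn Sx O M 0)) (snd (seqn Sx O M 0)))).
  { intros [l Hl]. apply Hnf. exists l. intros x Hx. apply Hl; auto.
    intros i Hi. simpl. specialize (Hb x Hx i Hi). apply abs_bd' in Hb. lra. }
  assert (Hn : forall n, ~ FC Sx O (inC (fst (seqn Sx O M n)) (snd (seqn Sx O M n))))
    by (intro n; apply (proj1 (seqn_prop Sx O M n HM)); auto).
  set (X := mkpt (lubc Sx O M HM)).
  assert (Hclose : forall n y, inC (fst (seqn Sx O M n)) (snd (seqn Sx O M n)) y ->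
            sdist X y <= 4 * (2 * M / 2 ^ n)).
  { intros n y Hy. apply sdist_le.
    { apply Rmult_le_pos; [lra|left; apply Rinv_0_lt_compat; apply pow_lt; lra]. }
    intros i Hi. unfold X. rewrite coord_mkpt by auto.
    destruct (lubc_prop Sx O M HM i n Hi). destruct (Hy i Hi).
    destruct (proj2 (seqn_prop Sx O M n HM) i Hi) as [Hw _].
    apply Rabs_le. lra. }
  assert (Hne : forall n, exists y, Sx y /\ inC (fst (seqn Sx O M n)) (snd (seqn Sx O M n)) y).
  { intro n. apply NNPP. intro Hc. apply (Hn n). exists nil. intros x Hx Hx'.
    exfalso. apply Hc. exists x. auto. }
  assert (HX : Sx X).
  { apply Hcl. intros eps He. destruct (small_pow (8*M) eps He ltac:(lra)) as [n Hn'].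
    destruct (Hne n) as [y [Hy Hyc]]. exists y. split; auto.
    pose proof (Hclose n y Hyc). unfold Rdiv in *. lra. }
  destruct (Hcov X HX) as [i Hi].
  destruct (Hopen i X Hi) as [eps [He Hball]].
  destruct (small_pow (8*M) eps He ltac:(lra)) as [n Hn'].
  apply (Hn n). exists (i :: nil). intros y Hy Hyc. exists i. split; [left; auto|].
  apply Hball. pose proof (Hclose n y Hyc). unfold Rdiv in *. lra.
Qed.

Definition cts (f : state -> R) : Prop :=
  forall x eps, 0 < eps -> exists del, 0 < del /\ forall y, sdist x y < del -> Rabs (f y - f x) < eps.

Lemma cts_ext f g : (forall p, f p = g p) -> cts f -> cts g.
Proof. intros H Hf x eps He. destruct (Hf x eps He) as [d [Hd Hy]]. exists d; split; auto.
  intros y Hy'. rewrite <- !H. auto. Qed.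
Lemma cts_const c : cts (fun _ => c).
Proof. intros x eps He. exists 1; split; [lra|]. intros. rewrite Rminus_diag, Rabs_R0; auto. Qed.
Lemma cts_coord i : cts (fun p => coord p i).
Proof. intros x eps He. exists eps; split; auto. intros y Hy.
  rewrite Rabs_minus_sym. eapply Rle_lt_trans; [apply coord_le_sdist|auto]. Qed.
Lemma cts_plus f g : cts f -> cts g -> cts (fun p => f p + g p).
Proof. intros Hf Hg x eps He.
  destruct (Hf x (eps/2) ltac:(lra)) as [d1 [Hd1 H1]]. destruct (Hg x (eps/2) ltac:(lra)) as [d2 [Hd2 H2]].
  exists (Rmin d1 d2); split; [apply Rmin_pos; auto|]. intros y Hy.
  specialize (H1 y (Rlt_le_trans _ _ _ Hy (Rmin_l _ _))). specialize (H2 y (Rlt_le_trans _ _ _ Hy (Rmin_r _ _))).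
  replace (f y + g y - (f x + g x)) with ((f y - f x) + (g y - g x)) by ring.
  eapply Rle_lt_trans; [apply Rabs_triang|lra]. Qed.
Lemma cts_opp f : cts f -> cts (fun p => - f p).
Proof. intros Hf x eps He. destruct (Hf x eps He) as [d [Hd H]]. exists d; split; auto.
  intros y Hy. replace (- f y - - f x) with (-(f y - f x)) by ring. rewrite Rabs_Ropp. auto. Qed.
Lemma cts_minus f g : cts f -> cts g -> cts (fun p => f p - g p).
Proof. intros. apply cts_plus; auto. apply cts_opp; auto. Qed.
Lemma cts_mult f g : cts f -> cts g -> cts (fun p => f p * g p).
Proof. intros Hf Hg x eps He.
  set (a := Rabs (f x)). set (b := Rabs (g x)).
  assert (Ha : 0 <= a) by apply Rabs_pos. assert (Hb : 0 <= b) by apply Rabs_pos.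
  set (e1 := Rmin 1 (eps / (2 * (b + 1)))). set (e2 := Rmin 1 (eps / (2 * (a + 1)))).
  assert (He1 : 0 < e1) by (apply Rmin_pos; [lra|apply Rdiv_lt_0_compat; lra]).
  assert (He2 : 0 < e2) by (apply Rmin_pos; [lra|apply Rdiv_lt_0_compat; lra]).
  destruct (Hf x e1 He1) as [d1 [Hd1 H1]]. destruct (Hg x e2 He2) as [d2 [Hd2 H2]].
  exists (Rmin d1 d2); split; [apply Rmin_pos; auto|]. intros y Hy.
  specialize (H1 y (Rlt_le_trans _ _ _ Hy (Rmin_l _ _))). specialize (H2 y (Rlt_le_trans _ _ _ Hy (Rmin_r _ _))).
  replace (f y * g y - f x * g x) with ((f y - f x) * g y + f x * (g y - g x)) by ring.
  eapply Rle_lt_trans; [apply Rabs_triang|]. rewrite !Rabs_mult.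
  assert (Hgy : Rabs (g y) <= b + 1).
  { replace (g y) with (g x + (g y - g x)) by ring. eapply Rle_trans; [apply Rabs_triang|].
    assert (e2 <= 1) by apply Rmin_l. unfold b; lra. }
  assert (T1 : Rabs (f y - f x) * Rabs (g y) <= e1 * (b + 1)).
  { apply Rmult_le_compat; try apply Rabs_pos; lra. }
  assert (T2 : Rabs (f x) * Rabs (g y - g x) <= a * e2).
  { apply Rmult_le_compat_l; auto. lra. }
  assert (T3 : e1 * (b+1) <= eps/2).
  { assert (e1 <= eps / (2 * (b + 1))) by apply Rmin_r.
    apply (Rmult_le_compat_r (b+1)) in H; [|lra]. replace (eps / (2 * (b + 1)) * (b + 1)) with (eps/2) in H by (field; lra). lra. }
  assert (T4 : a * e2 < eps/2).
  { assert (e2 <= eps / (2 * (a + 1))) by apply Rmin_r.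
    apply (Rmult_le_compat_l a) in H; [|lra].
    assert (a * (eps / (2 * (a + 1))) < eps/2).
    { replace (a * (eps / (2 * (a + 1)))) with ((eps/2) * (a/(a+1))) by (field; lra).
      assert (a/(a+1) < 1) by (apply (Rmult_lt_reg_r (a+1)); [lra|]; field_simplify; lra).
      nra. }
    unfold a in *. lra. }
  unfold a in *. lra. Qed.

Definition clamp (i : nat) : nat := match i with 0 => 0 | 1 => 1 | _ => 2 end.
Lemma mget_mk f i j : mget (mk_mat f) i j = f (clamp i) (clamp j).
Proof. destruct i as [|[|i]]; destruct j as [|[|j]]; reflexivity. Qed.
Lemma vget_mk f k : vget (mk_vec f) k = f (clamp k).
Proof. destruct k as [|[|k]]; reflexivity. Qed.

Definition ctsM (F : state -> mat3) : Prop := forall i j, cts (fun p => mget (F p) i j).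
Definition ctsV (F : state -> vec3) : Prop := forall k, cts (fun p => vget (F p) k).

Lemma ctsM_fst : ctsM fst.
Proof. intros i j. apply (cts_ext (fun p => coord p (3 * clamp i + clamp j))); [|apply cts_coord].
  intros p. destruct p as [[[[[a1 a2] a3] [[a4 a5] a6]] [[a7 a8] a9]] [[a10 a11] a12]].
  destruct i as [|[|i]]; destruct j as [|[|j]]; reflexivity. Qed.
Lemma ctsV_snd : ctsV snd.
Proof. intros k. apply (cts_ext (fun p => coord p (9 + clamp k))); [|apply cts_coord].
  intros p. destruct p as [[[[[a1 a2] a3] [[a4 a5] a6]] [[a7 a8] a9]] [[a10 a11] a12]].
  destruct k as [|[|k]]; reflexivity. Qed.
Lemma ctsM_const M : ctsM (fun _ => M).
Proof. intros i j. apply cts_const. Qed.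
Lemma ctsV_const v : ctsV (fun _ => v).
Proof. intros k. apply cts_const. Qed.

Lemma ctsM_mk (g : state -> nat -> nat -> R) : (forall i j, cts (fun p => g p i j)) ->
  ctsM (fun p => mk_mat (g p)).
Proof. intros H i j. apply (cts_ext (fun p => g p (clamp i) (clamp j))); [|auto].
  intro p. rewrite mget_mk. reflexivity. Qed.
Lemma ctsV_mk (g : state -> nat -> R) : (forall k, cts (fun p => g p k)) ->
  ctsV (fun p => mk_vec (g p)).
Proof. intros H k. apply (cts_ext (fun p => g p (clamp k))); [|auto].
  intro p. rewrite vget_mk. reflexivity. Qed.
Lemma cts_sum3 (g : state -> nat -> R) : (forall k, cts (fun p => g p k)) -> cts (fun p => sum3 (g p)).
Proof. intro H. unfold sum3. repeat apply cts_plus; auto. Qed.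

Lemma ctsM_madd F G : ctsM F -> ctsM G -> ctsM (fun p => madd (F p) (G p)).
Proof. intros. apply ctsM_mk. intros. apply cts_plus; auto. Qed.
Lemma ctsM_msub F G : ctsM F -> ctsM G -> ctsM (fun p => msub (F p) (G p)).
Proof. intros. apply ctsM_mk. intros. apply cts_minus; auto. Qed.
Lemma ctsM_transpose F : ctsM F -> ctsM (fun p => transpose (F p)).
Proof. intros. apply ctsM_mk. intros. auto. Qed.
Lemma ctsM_mmul F G : ctsM F -> ctsM G -> ctsM (fun p => mmul (F p) (G p)).
Proof. intros. apply ctsM_mk. intros. apply cts_sum3. intros. apply cts_mult; auto. Qed.
Lemma ctsV_mvmul F G : ctsM F -> ctsV G -> ctsV (fun p => mvmul (F p) (G p)).
Proof. intros. apply ctsV_mk. intros. apply cts_sum3. intros. apply cts_mult; auto. Qed.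
Lemma ctsV_vsub F G : ctsV F -> ctsV G -> ctsV (fun p => vsub (F p) (G p)).
Proof. intros. apply ctsV_mk. intros. apply cts_minus; auto. Qed.
Lemma cts_dot F G : ctsV F -> ctsV G -> cts (fun p => dot (F p) (G p)).
Proof. intros. unfold dot. apply cts_sum3. intros. apply cts_mult; auto. Qed.
Lemma cts_frob F G : ctsM F -> ctsM G -> cts (fun p => frob_inner (F p) (G p)).
Proof. intros. unfold frob_inner, trace. apply cts_sum3. intros k.
  apply (ctsM_mmul (fun p => transpose (F p)) G); auto. apply ctsM_transpose; auto. Qed.
Lemma cts_det F : ctsM F -> cts (fun p => det (F p)).
Proof. intro H. unfold det.
  repeat first [apply cts_minus | apply cts_plus | apply cts_mult | apply cts_opp | apply H]. Qed.

From Coquelicot Require Import Coquelicot.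
Definition Vq (I R0 : mat3) (Om0 : vec3) (k0 k1 k2 : R) (p : state) : R :=
  k0 / 4 * frob_inner (Amat (fst p)) (Amat (fst p))
  + k1 / 2 * (Efun I (snd p) - Efun I Om0) ^ 2
  + k2 / 2 * dot (vsub (pifun I (fst p) (snd p)) (pifun I R0 Om0))
                 (vsub (pifun I (fst p) (snd p)) (pifun I R0 Om0)).

Definition DirG (I R0 : mat3) (Om0 : vec3) (k0 k1 k2 : R) (p h : state) : R :=
  let Rm := fst p in let Om := snd p in let H := fst h in let w := snd h in
  k0 / 2 * frob_inner (Amat Rm) (madd (mmul (transpose H) Rm) (mmul (transpose Rm) H))
  + k1 * (Efun I Om - Efun I Om0) * (/ 2 * (dot w (mvmul I Om) + dot Om (mvmul I w)))
  + k2 * dot (vsub (pifun I Rm Om) (pifun I R0 Om0))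
             (vadd (mvmul (mmul H I) Om) (mvmul (mmul Rm I) w)).


Ltac unf2 := cbv beta iota zeta delta [vzero vget mk_vec mrow mget mk_mat sum3 vadd vscale vsub dot madd mscale msub transpose mmul mvmul mid trace det frob_inner sadd sscale fst snd Efun pifun Nat.eqb outer Amat Vq DirG mzero G1 Xv] in *.

Lemma frob_nonneg A : 0 <= frob_inner A A.
Proof. destruct A as [[[[a b] c] [[d e] f]] [[g h] i]]; unf2; nra. Qed.

Lemma V_Vq I R0 Om0 k0 k1 k2 p : Vfun I R0 Om0 k0 k1 k2 p = Vq I R0 Om0 k0 k1 k2 p.
Proof.
  unfold Vfun, Vq, frob_norm, vnorm. cbv zeta.
  rewrite pow2_sqrt by apply frob_nonneg. rewrite pow2_abs.
  rewrite pow2_sqrt by apply dot_nonneg. reflexivity.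
Qed.

Lemma Vq_deriv I R0 Om0 k0 k1 k2 p h :
  derivable_pt_lim (fun t => Vq I R0 Om0 k0 k1 k2 (sadd p (sscale t h))) 0
    (DirG I R0 Om0 k0 k1 k2 p h).
Proof.
  destruct p as [[[[[r1 r2] r3] [[r4 r5] r6]] [[r7 r8] r9]] [[w1 w2] w3]].
  destruct h as [[[[[s1 s2] s3] [[s4 s5] s6]] [[s7 s8] s9]] [[v1 v2] v3]].
  destruct I as [[[[i1 i2] i3] [[i4 i5] i6]] [[i7 i8] i9]].
  destruct R0 as [[[[q1 q2] q3] [[q4 q5] q6]] [[q7 q8] q9]].
  destruct Om0 as [[o1 o2] o3].
  apply is_derive_Reals. unf2.
  auto_derive; [tauto|]. field.
Qed.

Lemma DirG_simpl I R0 Om0 k0 k1 k2 p h : transpose I = I ->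
  DirG I R0 Om0 k0 k1 k2 p h =
  frob_inner (G1 I R0 Om0 k0 k1 k2 p) (fst h) + dot (mvmul I (Xv I R0 Om0 k0 k1 k2 p)) (snd h).
Proof.
  intro HT.
  destruct p as [[[[[r1 r2] r3] [[r4 r5] r6]] [[r7 r8] r9]] [[w1 w2] w3]].
  destruct h as [[[[[s1 s2] s3] [[s4 s5] s6]] [[s7 s8] s9]] [[v1 v2] v3]].
  destruct I as [[[[i1 i2] i3] [[i4 i5] i6]] [[i7 i8] i9]].
  destruct R0 as [[[[q1 q2] q3] [[q4 q5] q6]] [[q7 q8] q9]].
  destruct Om0 as [[o1 o2] o3].
  unf2. injection HT; intros. subst. field.
Qed.

Lemma frob_zero A : frob_inner A A = 0 -> A = mzero.
Proof. destruct A as [[[[a b] c] [[d e] f]] [[g h] i]]; unf2; intro H.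
  assert (a=0) by nra. assert (b=0) by nra. assert (c=0) by nra.
  assert (d=0) by nra. assert (e=0) by nra. assert (f=0) by nra.
  assert (g=0) by nra. assert (h=0) by nra. assert (i=0) by nra. subst; reflexivity. Qed.


Lemma frob_comm_zero A : frob_inner A mzero = 0.
Proof. destruct A as [[[[a b] c] [[d e] f]] [[g h] i]]; unf2; ring. Qed.
Lemma frob_mzero A : frob_inner mzero A = 0.
Proof. destruct A as [[[[a b] c] [[d e] f]] [[g h] i]]; unf2; ring. Qed.
Lemma dot_zero_l v : dot vzero v = 0.
Proof. destruct v as [[a b] c]; unf2; ring. Qed.
Lemma mvmul_zero' A : mvmul A vzero = vzero.
Proof. destruct A as [[[[a b] c] [[d e] f]] [[g h] i]]; unf2; f_equal; [f_equal|]; ring. Qed.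

Lemma Vfun_Vq I R0 Om0 k0 k1 k2 : Vfun I R0 Om0 k0 k1 k2 = Vq I R0 Om0 k0 k1 k2.
Proof. apply functional_extensionality; intro; apply V_Vq. Qed.

Lemma crit_iff I R0 Om0 k0 k1 k2 p : sym_posdef I ->
  critical (Vfun I R0 Om0 k0 k1 k2) p <->
  (G1 I R0 Om0 k0 k1 k2 p = mzero /\ Xv I R0 Om0 k0 k1 k2 p = vzero).
Proof.
  intros [HT HP]. unfold critical. rewrite Vfun_Vq. split.
  - intro Hc.
    assert (HD : forall h, DirG I R0 Om0 k0 k1 k2 p h = 0).
    { intro h. apply (uniqueness_limite (fun t => Vq I R0 Om0 k0 k1 k2 (sadd p (sscale t h))) 0).
      - apply Vq_deriv.
      - apply Hc. }
    split.
    + apply frob_zero. generalize (HD (G1 I R0 Om0 k0 k1 k2 p, vzero)).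
      rewrite DirG_simpl by exact HT. simpl. rewrite dot_comm, dot_zero_l. lra.
    + set (x := Xv I R0 Om0 k0 k1 k2 p).
      generalize (HD (mzero, x)). rewrite DirG_simpl by exact HT. simpl.
      rewrite frob_comm_zero. fold x. intro H.
      destruct (classic (x = vzero)) as [|Hn]; [assumption|].
      generalize (HP x Hn). rewrite dot_comm. lra.
  - intros [H1 H2] h. generalize (Vq_deriv I R0 Om0 k0 k1 k2 p h).
    rewrite DirG_simpl by exact HT. rewrite H1, H2, frob_mzero, mvmul_zero', dot_zero_l.
    replace (0+0) with 0 by ring. auto.
Qed.

Lemma sq_abs_bound y B : y*y <= B -> Rabs y <= B + 1.
Proof. intro H. destruct (Rle_or_lt (Rabs y) 1).
  - assert (0 <= y*y) by apply Rle_0_sqr. lra.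
  - assert (Rabs y * Rabs y = y*y) by (rewrite <- Rabs_mult; apply Rabs_pos_eq; apply Rle_0_sqr).
    nra. Qed.

Lemma quad_bound I K : sym_posdef I -> 0 <= K -> exists M, 0 <= M /\
  forall w, dot w (mvmul I w) <= K -> forall k, Rabs (vget w k) <= M.
Proof.
  intros [HT HP] HK. dm I. cbv beta iota delta [transpose mk_mat mk_vec mget mrow vget] in HT.
  injection HT; intros; subst.
  rename a into a11, a2 into a12, a5 into a13, a3 into a22, a6 into a23, a7 into a33.
  set (D2 := a11*a22 - a12*a12).
  set (D3 := a11*(a22*a33-a23*a23) - a12*(a12*a33-a23*a13) + a13*(a12*a23-a22*a13)).
  assert (Ha : 0 < a11).
  { specialize (HP (1,0,0)). unf. assert (0 < 1*(a11*1+a12*0+a13*0) + 0*(a12*1+a22*0+a23*0) + 0*(a13*1+a23*0+a33*0)).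
    { apply HP. intro H; injection H; lra. } lra. }
  assert (HD2 : 0 < D2).
  { specialize (HP (a12,-a11,0)). unf.
    assert (0 < a12*(a11*a12+a12*-a11+a13*0) + -a11*(a12*a12+a22*-a11+a23*0) + 0*(a13*a12+a23*-a11+a33*0)).
    { apply HP. intro H; injection H; lra. }
    assert (a12*(a11*a12+a12*-a11+a13*0) + -a11*(a12*a12+a22*-a11+a23*0) + 0*(a13*a12+a23*-a11+a33*0) = a11*D2) by (unfold D2; ring).
    nra. }
  assert (HD3 : 0 < D3).
  { set (x1 := a12*a23 - a13*a22). set (x2 := a13*a12 - a11*a23).
    specialize (HP (x1,x2,D2)). unf.
    assert (0 < x1*(a11*x1+a12*x2+a13*D2) + x2*(a12*x1+a22*x2+a23*D2) + D2*(a13*x1+a23*x2+a33*D2)).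
    { apply HP. intro H; injection H; lra. }
    assert (x1*(a11*x1+a12*x2+a13*D2) + x2*(a12*x1+a22*x2+a23*D2) + D2*(a13*x1+a23*x2+a33*D2) = D3*D2)
      by (unfold x1, x2, D2, D3; ring).
    nra. }
  set (X3 := D2*K/D3 + 1).
  set (X2 := (a11*D2*K + 1 + Rabs (a11*a23 - a12*a13) * X3) / D2).
  set (X1 := (a11*K + 1 + Rabs a12 * X2 + Rabs a13 * X3) / a11).
  assert (HX3 : 0 <= X3) by (unfold X3; apply Rplus_le_le_0_compat; [|lra];
    apply Rmult_le_pos; [apply Rmult_le_pos; lra|left; apply Rinv_0_lt_compat; auto]).
  assert (HX2 : 0 <= X2) by (unfold X2; apply Rmult_le_pos; [|left; apply Rinv_0_lt_compat; auto];
    pose proof (Rabs_pos (a11*a23 - a12*a13)); assert (0 <= a11*D2*K) by (apply Rmult_le_pos; nra); nra).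
  assert (HX1 : 0 <= X1) by (unfold X1; apply Rmult_le_pos; [|left; apply Rinv_0_lt_compat; auto];
    pose proof (Rabs_pos a12); pose proof (Rabs_pos a13); assert (0 <= a11*K) by nra; nra).
  exists (X1+X2+X3). split; [lra|].
  intros w Hw. dv w. unf.
  set (T := x*(a11*x+a12*x0+a13*x1) + x0*(a12*x+a22*x0+a23*x1) + x1*(a13*x+a23*x0+a33*x1)) in *.
  set (L1 := a11*x + a12*x0 + a13*x1). set (L2 := D2*x0 + (a11*a23 - a12*a13)*x1).
  assert (Hid : a11*D2*T = D2*(L1*L1) + L2*L2 + a11*D3*(x1*x1)) by (unfold T, L1, L2, D2, D3; ring).
  assert (HT0 : 0 <= T).
  { destruct (classic ((x,x0,x1) = vzero)) as [Hz|Hz].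
    - unfold vzero in Hz. injection Hz; intros; subst. unfold T; lra.
    - specialize (HP _ Hz). unf. unfold T; lra. }
  assert (HaD : 0 < a11*D2) by nra.
  assert (Hs1 : 0 <= L1*L1) by apply Rle_0_sqr. assert (Hs2 : 0 <= L2*L2) by apply Rle_0_sqr.
  assert (Hs3 : 0 <= x1*x1) by apply Rle_0_sqr.
  assert (HTK : a11*D2*T <= a11*D2*K) by (apply Rmult_le_compat_l; lra).
  assert (Hq1 : 0 <= D2*(L1*L1)) by (apply Rmult_le_pos; lra).
  assert (Hq3 : 0 <= a11*D3*(x1*x1)) by (apply Rmult_le_pos; [apply Rmult_le_pos|]; lra).
  assert (B3 : Rabs x1 <= X3).
  { apply sq_abs_bound. unfold X3. apply (Rmult_le_reg_l (a11*D3)); [nra|].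
    replace (a11*D3*(D2*K/D3)) with (a11*D2*K) by (field; lra). lra. }
  assert (B2 : Rabs x0 <= X2).
  { assert (HL2 : Rabs L2 <= a11*D2*K + 1) by (apply sq_abs_bound; lra).
    unfold X2. apply (Rmult_le_reg_l D2); auto. replace (D2 * ((a11*D2*K + 1 + Rabs (a11*a23 - a12*a13) * X3) / D2))
      with (a11*D2*K + 1 + Rabs (a11*a23 - a12*a13) * X3) by (field; lra).
    assert (D2*x0 = L2 - (a11*a23 - a12*a13)*x1) by (unfold L2; ring).
    replace (D2 * Rabs x0) with (Rabs (D2*x0)) by (rewrite Rabs_mult, (Rabs_pos_eq D2); lra). rewrite H.
    unfold Rminus. eapply Rle_trans; [apply Rabs_triang|]. rewrite Rabs_Ropp, Rabs_mult.
    assert (Rabs (a11 * a23 - a12 * a13) * Rabs x1 <= Rabs (a11 * a23 - a12 * a13) * X3)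
      by (apply Rmult_le_compat_l; [apply Rabs_pos|auto]). unfold Rminus in *. lra. }
  assert (B1 : Rabs x <= X1).
  { assert (HL1 : Rabs L1 <= a11*K + 1).
    { apply sq_abs_bound. apply (Rmult_le_reg_l D2); auto. lra. }
    unfold X1. apply (Rmult_le_reg_l a11); auto.
    replace (a11 * ((a11*K + 1 + Rabs a12 * X2 + Rabs a13 * X3) / a11))
      with (a11*K + 1 + Rabs a12 * X2 + Rabs a13 * X3) by (field; lra).
    assert (a11*x = L1 - a12*x0 - a13*x1) by (unfold L1; ring).
    replace (a11 * Rabs x) with (Rabs (a11*x)) by (rewrite Rabs_mult, (Rabs_pos_eq a11); lra). rewrite H.
    unfold Rminus. eapply Rle_trans; [apply Rabs_triang|]. rewrite Rabs_Ropp.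
    eapply Rle_trans; [apply Rplus_le_compat_r; apply Rabs_triang|]. rewrite Rabs_Ropp, !Rabs_mult.
    assert (Rabs a12 * Rabs x0 <= Rabs a12 * X2) by (apply Rmult_le_compat_l; [apply Rabs_pos|auto]).
    assert (Rabs a13 * Rabs x1 <= Rabs a13 * X3) by (apply Rmult_le_compat_l; [apply Rabs_pos|auto]).
    lra. }
  intro k. destruct k as [|[|k]]; simpl; lra.
Qed.

Lemma iso_exists I mu0 : exists del, 0 < del /\
  forall mu, det (msub I (mscale mu mid)) = 0 -> Rabs (mu - mu0) < del -> mu = mu0.
Proof.
  dm I.
  set (A0 := det (msub (a, a0, a1, (a2, a3, a4), (a5, a6, a7)) (mscale mu0 mid))).
  set (A1 := -((a-mu0)*(a3-mu0) - a0*a2 + (a-mu0)*(a7-mu0) - a1*a5 + (a3-mu0)*(a7-mu0) - a4*a6)).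
  set (A2 := (a-mu0)+(a3-mu0)+(a7-mu0)).
  destruct (cubic_iso A0 A1 A2) as [del [Hd H]]. exists del. split; auto.
  intros mu Hdet Hlt.
  assert (A0 + A1*(mu-mu0) + A2*((mu-mu0)*(mu-mu0)) - (mu-mu0)*((mu-mu0)*(mu-mu0)) = 0).
  { rewrite <- Hdet. unfold A0, A1, A2. unf. ring. }
  specialize (H (mu - mu0) H0 Hlt). lra.
Qed.

Lemma entry_small x S : x*x <= S -> S <= /10000 -> Rabs x <= /100.
Proof. intros. apply Rabs_le. split; nra. Qed.

Lemma det_near A : frob_inner A A <= /10000 -> /4 <= det (madd A mid).
Proof.
  dm A. unf. intro H.
  assert (Hs : forall x, 0 <= x*x) by (intro; apply Rle_0_sqr).
  pose proof (Hs a); pose proof (Hs a0); pose proof (Hs a1); pose proof (Hs a2); pose proof (Hs a3);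
  pose proof (Hs a4); pose proof (Hs a5); pose proof (Hs a6); pose proof (Hs a7).
  assert (B : forall x, x*x <= a * a + a2 * a2 + a5 * a5 + (a0 * a0 + a3 * a3 + a6 * a6) + (a1 * a1 + a4 * a4 + a7 * a7) -> Rabs x <= /100)
    by (intros x Hx; apply (entry_small x _ Hx H)).
  pose proof (B a ltac:(lra)) as Ba; pose proof (B a0 ltac:(lra)) as Ba0; pose proof (B a1 ltac:(lra)) as Ba1;
  pose proof (B a2 ltac:(lra)) as Ba2; pose proof (B a3 ltac:(lra)) as Ba3; pose proof (B a4 ltac:(lra)) as Ba4;
  pose proof (B a5 ltac:(lra)) as Ba5; pose proof (B a6 ltac:(lra)) as Ba6; pose proof (B a7 ltac:(lra)) as Ba7.
  clear B.
  apply abs_bd in Ba. apply abs_bd in Ba3. apply abs_bd in Ba7.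
  assert (P1 : 99/100 * (99/100) <= (a3+1)*(a7+1)) by (apply Rmult_le_compat; lra).
  assert (Q1 : Rabs (a4*a6) <= /100 * /100) by (apply abs_mul_le; auto).
  assert (Q2 : Rabs (a2*(a7+1) - a4*a5) <= /100 * (101/100) + /100 * /100).
  { unfold Rminus. eapply Rle_trans; [apply Rabs_triang|]. rewrite Rabs_Ropp.
    apply Rplus_le_compat; apply abs_mul_le; auto. apply Rabs_le; lra. }
  assert (Q3 : Rabs (a2*a6 - (a3+1)*a5) <= /100 * /100 + (101/100) * /100).
  { unfold Rminus. eapply Rle_trans; [apply Rabs_triang|]. rewrite Rabs_Ropp.
    apply Rplus_le_compat; apply abs_mul_le; auto. apply Rabs_le; lra. }
  assert (Q4 : Rabs (a0*(a2*(a7+1) - a4*a5)) <= /100 * (/100 * (101/100) + /100 * /100)) by (apply abs_mul_le; auto).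
  assert (Q5 : Rabs (a1*(a2*a6 - (a3+1)*a5)) <= /100 * (/100 * /100 + (101/100) * /100)) by (apply abs_mul_le; auto).
  apply abs_bd in Q1. apply abs_bd in Q4. apply abs_bd in Q5.
  assert (P2 : 0 <= (a3+1)*(a7+1) - a4*a6) by lra.
  assert (P3 : 99/100 * ((a3+1)*(a7+1) - a4*a6) <= (a+1) * ((a3+1)*(a7+1) - a4*a6))
    by (apply Rmult_le_compat_r; lra).
  lra.
Qed.

Lemma det_RtR R : det (mmul (transpose R) R) = det R * det R.
Proof. dm R; unf; ring. Qed.
Lemma det_mid : det mid = 1.
Proof. unf; ring. Qed.

Lemma det_half R : frob_inner (Amat R) (Amat R) <= /10000 -> 0 < det R -> /2 <= det R.
Proof. intros H Hd. pose proof (det_near _ H) as Hn. rewrite <- RtR, det_RtR in Hn. nra. Qed.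

Lemma frob_entry A i j : mget A i j * mget A i j <= frob_inner A A.
Proof.
  dm A. assert (Hs : forall x, 0 <= x*x) by (intro; apply Rle_0_sqr).
  pose proof (Hs a); pose proof (Hs a0); pose proof (Hs a1); pose proof (Hs a2); pose proof (Hs a3);
  pose proof (Hs a4); pose proof (Hs a5); pose proof (Hs a6); pose proof (Hs a7).
  destruct i as [|[|i]]; destruct j as [|[|j]]; unf; lra.
Qed.

Lemma R_bound R : frob_inner (Amat R) (Amat R) <= /10000 -> forall i j, Rabs (mget R i j) <= 3.
Proof.
  intros H i j.
  assert (Hc : forall k, mget (Amat R) k k <= /100).
  { intro k. pose proof (frob_entry (Amat R) k k). apply abs_bd. apply entry_small with (S := frob_inner (Amat R) (Amat R)); lra. }
  pose proof (Hc 0%nat) as H0. pose proof (Hc 1%nat) as H1. pose proof (Hc 2%nat) as H2.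
  dm R. unf.
  assert (Hs : forall x, 0 <= x*x) by (intro; apply Rle_0_sqr).
  pose proof (Hs a); pose proof (Hs a0); pose proof (Hs a1); pose proof (Hs a2); pose proof (Hs a3);
  pose proof (Hs a4); pose proof (Hs a5); pose proof (Hs a6); pose proof (Hs a7).
  assert (F : forall x, x*x <= 2 -> Rabs x <= 3) by (intros x Hx; pose proof (sq_abs_bound x 2 Hx); lra).
  destruct i as [|[|i]]; destruct j as [|[|j]]; simpl; apply F; lra.
Qed.

Lemma vsub_zero a b : vsub a b = vzero -> a = b.
Proof. dv a; dv b; unf; intro H; injection H; intros; peq; lra. Qed.
Lemma vsub_self a : vsub a a = vzero.
Proof. solve_lin. Qed.
Lemma frob_mzero2 : frob_inner mzero mzero = 0.
Proof. unf; ring. Qed.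
Lemma dot_vzero : dot vzero vzero = 0.
Proof. unf; ring. Qed.
Lemma Amat_zero_iff R : Amat R = mzero <-> mmul (transpose R) R = mid.
Proof. split; intro H.
  - rewrite RtR, H. solve_lin.
  - unfold Amat. rewrite H. solve_lin. Qed.
Lemma SO3_iff R : SO3 R <-> Amat R = mzero /\ 0 < det R.
Proof. unfold SO3. rewrite Amat_zero_iff. split.
  - intros [H1 H2]. split; auto. lra.
  - intros [H1 H2]. split; auto. pose proof (det_RtR R) as H. rewrite H1, det_mid in H. nra. Qed.

Lemma Vq_nonneg I R0 Om0 k0 k1 k2 p : 0 < k0 -> 0 < k1 -> 0 < k2 -> 0 <= Vq I R0 Om0 k0 k1 k2 p.
Proof. intros. unfold Vq. pose proof (frob_nonneg (Amat (fst p))).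
  pose proof (dot_nonneg (vsub (pifun I (fst p) (snd p)) (pifun I R0 Om0))).
  pose proof (pow2_ge_0 (Efun I (snd p) - Efun I Om0)).
  assert (0 <= k0/4 * frob_inner (Amat (fst p)) (Amat (fst p))) by (apply Rmult_le_pos; lra).
  assert (0 <= k1/2 * (Efun I (snd p) - Efun I Om0)^2) by (apply Rmult_le_pos; lra).
  assert (0 <= k2/2 * dot (vsub (pifun I (fst p) (snd p)) (pifun I R0 Om0)) (vsub (pifun I (fst p) (snd p)) (pifun I R0 Om0))) by (apply Rmult_le_pos; lra).
  lra. Qed.

Lemma Vq_zero_iff I R0 Om0 k0 k1 k2 p : 0 < k0 -> 0 < k1 -> 0 < k2 ->
  (Vq I R0 Om0 k0 k1 k2 p = 0 <->
   (Amat (fst p) = mzero /\ Efun I (snd p) = Efun I Om0 /\ pifun I (fst p) (snd p) = pifun I R0 Om0)).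
Proof. intros Hk0 Hk1 Hk2. unfold Vq. split.
  - intro H. pose proof (frob_nonneg (Amat (fst p))).
    pose proof (dot_nonneg (vsub (pifun I (fst p) (snd p)) (pifun I R0 Om0))).
    pose proof (pow2_ge_0 (Efun I (snd p) - Efun I Om0)).
    assert (0 <= k0/4 * frob_inner (Amat (fst p)) (Amat (fst p))) by (apply Rmult_le_pos; lra).
    assert (0 <= k1/2 * (Efun I (snd p) - Efun I Om0)^2) by (apply Rmult_le_pos; lra).
    assert (0 <= k2/2 * dot (vsub (pifun I (fst p) (snd p)) (pifun I R0 Om0)) (vsub (pifun I (fst p) (snd p)) (pifun I R0 Om0))) by (apply Rmult_le_pos; lra).
    split; [|split].
    + apply frob_zero. apply (Rmult_eq_reg_l (k0/4)); [|lra]. lra.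
    + assert ((Efun I (snd p) - Efun I Om0)^2 = 0) by (apply (Rmult_eq_reg_l (k1/2)); lra).
      simpl in H6. nra.
    + apply vsub_zero. destruct (classic (vsub (pifun I (fst p) (snd p)) (pifun I R0 Om0) = vzero)) as [|Hn]; auto.
      exfalso. pose proof (dot_pos _ Hn). assert (0 < k2/2 * dot (vsub (pifun I (fst p) (snd p)) (pifun I R0 Om0)) (vsub (pifun I (fst p) (snd p)) (pifun I R0 Om0))) by (apply Rmult_lt_0_compat; lra). lra.
  - intros [H1 [H2 H3]]. rewrite H1, H2, H3, vsub_self, frob_mzero2, dot_vzero. ring.
Qed.

Lemma zero_crit I R0 Om0 k0 k1 k2 p :
  Amat (fst p) = mzero -> Efun I (snd p) = Efun I Om0 -> pifun I (fst p) (snd p) = pifun I R0 Om0 ->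
  G1 I R0 Om0 k0 k1 k2 p = mzero /\ Xv I R0 Om0 k0 k1 k2 p = vzero.
Proof. intros H1 H2 H3. unfold G1, Xv. rewrite H1, H2, H3, vsub_self, Rminus_diag. split; solve_lin. Qed.

Lemma adj_mat M X : mmul (adj M) (mmul M X) = mscale (det M) X.
Proof. solve_lin. Qed.
Lemma mscale_zero c X : c <> 0 -> mscale c X = mzero -> X = mzero.
Proof. intro Hc. dm X; unf; intro H; injection H; intros. peq; apply (Rmult_eq_reg_l c); auto; lra. Qed.
Lemma mmul_mzero M : mmul M mzero = mzero.
Proof. solve_lin. Qed.
Lemma mat_inj M X : det M <> 0 -> mmul M X = mzero -> X = mzero.
Proof. intros Hd H. apply (mscale_zero (det M)); auto. rewrite <- adj_mat, H. apply mmul_mzero. Qed.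
Lemma RtR_A R : mmul (mmul (transpose R) R) (Amat R) = madd (Amat R) (mmul (Amat R) (Amat R)).
Proof. rewrite RtR. set (A := Amat R). clearbody A. solve_lin. Qed.
Lemma mscale_0 X : mscale 0 X = mzero.
Proof. solve_lin. Qed.
Lemma vscale_0 v : vscale 0 v = vzero.
Proof. solve_lin. Qed.

Lemma crit_e0 I R0 Om0 k0 k1 k2 p : 0 < k0 -> 0 < k1 -> 0 < k2 -> 0 < det (fst p) ->
  G1 I R0 Om0 k0 k1 k2 p = mzero -> Xv I R0 Om0 k0 k1 k2 p = vzero ->
  Efun I (snd p) = Efun I Om0 -> Vq I R0 Om0 k0 k1 k2 p = 0.
Proof.
  intros Hk0 Hk1 Hk2 Hd HG HX He.
  pose proof (Xv_zero I R0 Om0 k0 k1 k2 p ltac:(lra) HX) as HX'.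
  rewrite He, Rminus_diag in HX'. replace (- (k1 * 0) / k2) with 0 in HX' by (field; lra).
  rewrite vscale_0 in HX'.
  apply mv_inj in HX'; [|rewrite det_transpose; lra].
  pose proof (Seq I R0 Om0 k0 k1 k2 p) as HS. rewrite HG, HX, msub_zero in HS.
  apply mat_div in HS; [|lra]. rewrite He, Rminus_diag in HS.
  replace (k1 * 0 / k0) with 0 in HS by (field; lra). rewrite mscale_0 in HS.
  rewrite <- RtR_A in HS. apply mat_inj in HS; [|rewrite det_RtR; nra].
  apply Vq_zero_iff; auto. split; [auto|split; auto]. apply vsub_zero. auto.
Qed.

Lemma ctsM_Amat : ctsM (fun p => Amat (fst p)).
Proof. unfold Amat. apply ctsM_msub; [apply ctsM_mmul; [apply ctsM_transpose; apply ctsM_fst|apply ctsM_fst]|apply ctsM_const]. Qed.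
Lemma cts_Efun I : cts (fun p => Efun I (snd p)).
Proof. unfold Efun. apply cts_mult; [apply cts_const|]. apply cts_dot; [apply ctsV_snd|].
  apply ctsV_mvmul; [apply ctsM_const|apply ctsV_snd]. Qed.
Lemma ctsV_pifun I : ctsV (fun p => pifun I (fst p) (snd p)).
Proof. unfold pifun. apply ctsV_mvmul; [|apply ctsV_snd]. apply ctsM_mmul; [apply ctsM_fst|apply ctsM_const]. Qed.

Lemma cts_Vq I R0 Om0 k0 k1 k2 : cts (Vq I R0 Om0 k0 k1 k2).
Proof.
  apply (cts_ext (fun p => k0 / 4 * frob_inner (Amat (fst p)) (Amat (fst p))
    + k1 / 2 * ((Efun I (snd p) - Efun I Om0) * (Efun I (snd p) - Efun I Om0))
    + k2 / 2 * dot (vsub (pifun I (fst p) (snd p)) (pifun I R0 Om0)) (vsub (pifun I (fst p) (snd p)) (pifun I R0 Om0)))).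
  { intro p. unfold Vq. ring. }
  apply cts_plus; [apply cts_plus|].
  - apply cts_mult; [apply cts_const|]. apply cts_frob; apply ctsM_Amat.
  - apply cts_mult; [apply cts_const|]. apply cts_mult; apply cts_minus; try apply cts_Efun; apply cts_const.
  - apply cts_mult; [apply cts_const|]. apply cts_dot; apply ctsV_vsub; try apply ctsV_pifun; apply ctsV_const.
Qed.
Lemma cts_detfst : cts (fun p => det (fst p)).
Proof. apply cts_det. apply ctsM_fst. Qed.

Lemma closed_le f x a (P : state -> Prop) : cts f ->
  (forall eps, 0 < eps -> exists y, P y /\ sdist x y < eps) -> (forall y, P y -> f y <= a) -> f x <= a.
Proof. intros Hf Hx Hy. destruct (Rle_or_lt (f x) a) as [|Hlt]; auto. exfalso.
  destruct (Hf x (f x - a) ltac:(lra)) as [d [Hd H]]. destruct (Hx d Hd) as [y [Py Hxy]].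
  specialize (H y Hxy). specialize (Hy y Py). apply Rabs_def2 in H. lra. Qed.
Lemma closed_ge f x a (P : state -> Prop) : cts f ->
  (forall eps, 0 < eps -> exists y, P y /\ sdist x y < eps) -> (forall y, P y -> a <= f y) -> a <= f x.
Proof. intros Hf Hx Hy. assert (- f x <= - a); [|lra].
  apply (closed_le (fun p => - f p) x (-a) P); auto. apply cts_opp; auto.
  intros y Py. specialize (Hy y Py). lra. Qed.

Lemma min7 q1 q2 q3 q4 q5 q6 q7 : 0 < q1 -> 0 < q2 -> 0 < q3 -> 0 < q4 -> 0 < q5 -> 0 < q6 -> 0 < q7 ->
  exists c, 0 < c /\ c < q1 /\ c < q2 /\ c < q3 /\ c < q4 /\ c < q5 /\ c < q6 /\ c < q7.
Proof. intros.
  assert (0 < Rmin (Rmin (Rmin q1 q2) (Rmin q3 q4)) (Rmin (Rmin q5 q6) q7)) by (repeat apply Rmin_pos; auto).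
  pose proof (Rmin_l (Rmin (Rmin q1 q2) (Rmin q3 q4)) (Rmin (Rmin q5 q6) q7)).
  pose proof (Rmin_r (Rmin (Rmin q1 q2) (Rmin q3 q4)) (Rmin (Rmin q5 q6) q7)).
  pose proof (Rmin_l (Rmin q1 q2) (Rmin q3 q4)). pose proof (Rmin_r (Rmin q1 q2) (Rmin q3 q4)).
  pose proof (Rmin_l q1 q2). pose proof (Rmin_r q1 q2). pose proof (Rmin_l q3 q4). pose proof (Rmin_r q3 q4).
  pose proof (Rmin_l (Rmin q5 q6) q7). pose proof (Rmin_r (Rmin q5 q6) q7).
  pose proof (Rmin_l q5 q6). pose proof (Rmin_r q5 q6).
  exists (Rmin (Rmin (Rmin q1 q2) (Rmin q3 q4)) (Rmin (Rmin q5 q6) q7) / 2). lra. Qed.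

Lemma sq_le_abs x y : 0 <= y -> x*x <= y*y -> Rabs x <= y.
Proof. intros Hy H. destruct (Rle_or_lt (Rabs x) y); auto.
  assert (Rabs x * Rabs x = x*x) by (rewrite <- Rabs_mult; apply Rabs_pos_eq; apply Rle_0_sqr). nra. Qed.

Lemma coord_bound p M : (forall i j, Rabs (mget (fst p) i j) <= M) -> (forall k, Rabs (vget (snd p) k) <= M) ->
  forall i, (i < 12)%nat -> Rabs (coord p i) <= M.
Proof.
  destruct p as [[[[[a1 a2] a3] [[a4 a5] a6]] [[a7 a8] a9]] [[a10 a11] a12]].
  intros HR HW i Hi.
  destruct i as [|[|[|[|[|[|[|[|[|[|[|[|i]]]]]]]]]]]];
  [apply (HR 0%nat 0%nat)|apply (HR 0%nat 1%nat)|apply (HR 0%nat 2%nat)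
  |apply (HR 1%nat 0%nat)|apply (HR 1%nat 1%nat)|apply (HR 1%nat 2%nat)
  |apply (HR 2%nat 0%nat)|apply (HR 2%nat 1%nat)|apply (HR 2%nat 2%nat)
  |apply (HW 0%nat)|apply (HW 1%nat)|apply (HW 2%nat)|lia].
Qed.

Theorem lemma4 (I R0 : mat3) (Om0 : vec3) (k0 k1 k2 : R)
  (HI : sym_posdef I) (HR0 : SO3 R0) (HOm0 : Om0 <> vzero)
  (Hk0 : 0 < k0) (Hk1 : 0 < k1) (Hk2 : 0 < k2) :
  let E0 := Efun I Om0 in
  let pi0 := pifun I R0 Om0 in
  let V := Vfun I R0 Om0 k0 k1 k2 in
  exists c : R,
    0 < c /\ c < k0 / 4 /\ c < k1 * Rabs E0 / 2 /\ c < k2 * (vnorm pi0) ^ 2 / 2 /\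
    (* V^{-1}([0,c]) (V being defined on U) is a compact subset of U *)
    (forall p, (U p /\ 0 <= V p <= c) -> U p) /\
    is_compact (fun p => U p /\ 0 <= V p <= c) /\
    (* critical points of V in V^{-1}([0,c]) are exactly V^{-1}(0) *)
    (forall p, ((U p /\ 0 <= V p <= c) /\ critical V p) <-> (U p /\ V p = 0)) /\
    (* description of V^{-1}(0) *)
    (forall p, (U p /\ V p = 0) <->
       (SO3 (fst p) /\ Efun I (snd p) = E0 /\ pifun I (fst p) (snd p) = pi0)).
Proof.
  intros E0 pi0 V.
  set (P := dot pi0 pi0).
  assert (HOmI : 0 < dot Om0 (mvmul I Om0)) by (apply (proj2 HI); auto).
  assert (HE0 : 0 < E0).
  { unfold E0, Efun. pose proof (proj2 HI Om0 HOm0). lra. }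
  assert (HP : 0 < P).
  { unfold P. apply dot_pos. intro Hz. unfold pi0, pifun in Hz. rewrite mvmul_mmul in Hz.
    apply mv_inj in Hz; [|destruct HR0 as [_ Hd]; rewrite Hd; lra].
    pose proof (proj2 HI Om0 HOm0). rewrite Hz in H. unf. lra. }
  set (mu0 := P / (2 * E0)).
  assert (Hmu0 : 0 < mu0) by (unfold mu0; apply Rdiv_lt_0_compat; lra).
  destruct (iso_exists I mu0) as [delta [Hdel Hiso]].
  destruct (quad_bound I (4 * E0) HI ltac:(lra)) as [MW [HMW HMWb]].
  set (eta := Rmin (/100) (delta / (7 * mu0))).
  assert (Heta : 0 < eta) by (apply Rmin_pos; [lra|apply Rdiv_lt_0_compat; lra]).
  assert (Heta1 : eta <= /100) by apply Rmin_l.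
  assert (Heta2 : 7 * mu0 * eta <= delta).
  { assert (eta <= delta / (7*mu0)) by apply Rmin_r.
    apply (Rmult_le_compat_l (7*mu0)) in H; [|lra]. replace (7 * mu0 * (delta / (7 * mu0))) with delta in H by (field; lra). lra. }
  set (q7 := eta * k2 * P / (16 * k1 * E0)).
  assert (Hq7 : 0 < q7).
  { unfold q7; apply Rdiv_lt_0_compat; repeat apply Rmult_lt_0_compat; lra. }
  assert (Q1 : 0 < k0/4) by lra.
  assert (Q2 : 0 < k1*E0/2) by (clearbody E0; repeat (first [apply Rdiv_lt_0_compat | apply Rmult_lt_0_compat]); lra).
  assert (Q3 : 0 < k2*P/2) by (clearbody P; repeat (first [apply Rdiv_lt_0_compat | apply Rmult_lt_0_compat]); lra).
  assert (Q4 : 0 < k0*(eta*eta)/4) by (clearbody eta; repeat (first [apply Rdiv_lt_0_compat | apply Rmult_lt_0_compat]); lra).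
  assert (Q5 : 0 < k1*((eta*E0)*(eta*E0))/2) by (clearbody eta E0; repeat (first [apply Rdiv_lt_0_compat | apply Rmult_lt_0_compat]); lra).
  assert (Q6 : 0 < k2*P/8) by (clearbody P; repeat (first [apply Rdiv_lt_0_compat | apply Rmult_lt_0_compat]); lra).
  assert (Q7 : 0 < k1*(q7*q7)/2) by (clearbody q7; repeat (first [apply Rdiv_lt_0_compat | apply Rmult_lt_0_compat]); lra).
  destruct (min7 _ _ _ _ _ _ _ Q1 Q2 Q3 Q4 Q5 Q6 Q7)
    as (c & Hc0 & Hc1 & Hc2 & Hc3 & Hc4 & Hc5 & Hc6 & Hc7).
  assert (SL : forall p, Vq I R0 Om0 k0 k1 k2 p <= c ->
    frob_inner (Amat (fst p)) (Amat (fst p)) <= eta * eta /\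
    Rabs (Efun I (snd p) - E0) <= eta * E0 /\
    16 * k1 * Rabs (Efun I (snd p) - E0) * E0 <= eta * k2 * P /\
    4 * dot (vsub (pifun I (fst p) (snd p)) pi0) (vsub (pifun I (fst p) (snd p)) pi0) <= P /\
    dot (snd p) (mvmul I (snd p)) <= 4 * E0).
  { intros p Hp. unfold Vq in Hp. fold E0 pi0 in Hp.
    set (F := frob_inner (Amat (fst p)) (Amat (fst p))) in *.
    set (e := Efun I (snd p) - E0) in *.
    set (D := dot (vsub (pifun I (fst p) (snd p)) pi0) (vsub (pifun I (fst p) (snd p)) pi0)) in *.
    assert (HF : 0 <= F) by apply frob_nonneg. assert (HD : 0 <= D) by apply dot_nonneg.
    assert (He2 : 0 <= e^2) by apply pow2_ge_0.
    assert (T1 : 0 <= k0/4*F) by (apply Rmult_le_pos; lra).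
    assert (T2 : 0 <= k1/2*e^2) by (apply Rmult_le_pos; lra).
    assert (T3 : 0 <= k2/2*D) by (apply Rmult_le_pos; lra).
    assert (Hee : Rabs e <= eta * E0).
    { apply sq_le_abs; [nra|]. apply (Rmult_le_reg_l (k1/2)); [lra|]. simpl in T2, Hp. nra. }
    repeat split.
    - apply (Rmult_le_reg_l (k0/4)); [lra|]. nra.
    - exact Hee.
    - assert (Rabs e <= q7).
      { apply sq_le_abs; [lra|]. apply (Rmult_le_reg_l (k1/2)); [lra|]. simpl in T2, Hp. nra. }
      unfold q7 in H. apply (Rmult_le_compat_l (16*k1*E0)) in H; [|nra].
      replace (16 * k1 * E0 * (eta * k2 * P / (16 * k1 * E0))) with (eta*k2*P) in H by (field; lra). lra.
    - apply (Rmult_le_reg_l (k2/2)); [lra|]. nra.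
    - unfold e, Efun in Hee. apply abs_bd in Hee. nra. }
  exists c. split; [auto|]. split; [auto|].
  split; [rewrite Rabs_pos_eq by lra; lra|].
  split; [unfold vnorm; rewrite pow2_sqrt by apply dot_nonneg; fold P; lra|].
  unfold V. rewrite Vfun_Vq.
  split; [tauto|].
  split; [|split].
  -
    apply (HB _ (Rmax 3 MW)); [eapply Rle_trans; [|apply Rmax_l]; lra| |].
    + intros p [HU [_ Hp]] i Hi. destruct (SL p Hp) as (H1&_&_&_&H5).
      apply coord_bound; auto.
      * intros a b. eapply Rle_trans; [apply R_bound|apply Rmax_l]. nra.
      * intro k. eapply Rle_trans; [apply (HMWb _ H5)|apply Rmax_r].
    + intros x Hx. split; [|split].
      * unfold U. assert (/2 <= det (fst x)); [|lra].
        apply (closed_ge (fun p => det (fst p)) x (/2) _ cts_detfst Hx).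
        intros y [HU [_ Hy]]. destruct (SL y Hy) as (H1&_). apply det_half; auto. nra.
      * apply Vq_nonneg; auto.
      * apply (closed_le _ x c _ (cts_Vq I R0 Om0 k0 k1 k2) Hx). intros y [_ [_ Hy]]; auto.
  -
    intro p. rewrite <- Vfun_Vq, crit_iff by auto. rewrite Vfun_Vq. split.
    + intros [[HU [_ Hp]] [HG HX]]. split; auto.
      destruct (SL p Hp) as (H1&H2&H3&H4&_).
      apply (crit_e0 I R0 Om0 k0 k1 k2 p); auto.
      destruct p as [Rm w]. simpl in *.
      apply (core I R0 Om0 k0 k1 k2 Rm w eta delta); auto.
    + intros [HU HV]. split; [split; [auto|lra]|].
      apply Vq_zero_iff in HV; auto. destruct HV as (H1&H2&H3). apply zero_crit; auto.
  - intro p. rewrite Vq_zero_iff by auto. rewrite SO3_iff. unfold U. tauto.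
Qed.
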